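(* Fix $r_0,u_0,\Lambda>0$ and $(\mathring g,\mathring\lambda_g,\mathring e_g)\in D$. There exist $\varepsilon>0$ and a constant $C>0$ depending only on $r_0,u_0,\mathring g,\Lambda$ (and not on $\mathring f$) such that for every $(\mathring f,\mathring\lambda_f,\mathring e_f)\in D$ with $d:=\|\mathring f-\mathring g\|_{L^\infty}<\varepsilon$: $$\|\mathring\lambda_f\|_{L^\infty}\le C,\qquad \|\mathring e_f\|_{L^\infty}\le C,$$ and each of the quantities $$\|e^{\mathring\lambda_f}-e^{\mathring\lambda_g}\|_{L^\infty},\ \|e^{\mathring\lambda_f}\mathring e_f-e^{\mathring\lambda_g}\mathring e_g\|_{L^\infty},\ \|\mathring e_f-\mathring e_g\|_{L^\infty},\ \|\mathring\lambda_f-\mathring\lambda_g\|_{L^\infty},\ \|e^{2\mathring\lambda_f}\mathring e_f^2-e^{2\mathring\lambda_g}\mathring e_g^2\|_{L^\infty},\ \|e^{2\mathring\lambda_f}-e^{2\mathring\lambda_g}\|_{L^\infty}$$ is bounded by $Cd$.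
   Context: Units with gravitational constant and speed of light equal to $1$; $q\in\mathbb R$ is a fixed charge parameter. For $x\in\mathbb R^3$ write $r=|x|$. A function $h(x,v)$ on $\mathbb R^6$ is spherically symmetric if $h(Ax,Av)=h(x,v)$ for all $A\in SO(3)$. Constraint equations for initial data: given $\mathring f\ge 0$, functions $\mathring\lambda(r),\mathring\mu(r),\mathring e(r)$ on $[0,\infty)$ with $e^{-2\mathring\lambda}(2r\mathring\lambda'-1)+1=8\pi r^2\mathring\rho$, $e^{-2\mathring\lambda}(2r\mathring\mu'-1)+1=8\pi r^2\mathring p$, $\partial_r(r^2e^{\mathring\lambda}\mathring e)=qr^2e^{\mathring\lambda}\mathring M$, where $\mathring\rho=\int_{\mathbb R^3}\mathring f\sqrt{1+|v|^2}\,dv+\tfrac12 e^{2\mathring\lambda}\mathring e^2$, $\mathring p=\int_{\mathbb R^3}(\tfrac{x\cdot v}{r})^2\mathring f\,\tfrac{dv}{\sqrt{1+|v|^2}}-\tfrac12 e^{2\mathring\lambda}\mathring e^2$, $\mathring M=\int_{\mathbb R^3}\mathring f\,dv$; a regular solution of the constraints additionally has $\mathring\lambda\ge0$, $\mathring\mu\le0$, these functions $C^1$, and $\lim_{r\to\infty}\mathring\lambda=\lim_{r\to\infty}\mathring\mu=\mathring\lambda(0)=\lim_{r\to\infty}\mathring e=\mathring e(0)=0$. For $r_0,u_0,\Lambda>0$, $D$ is the set of triples $(\mathring f,\mathring\lambda,\mathring e)$ with $\mathring f\in C^\infty(\mathbb R^6)$ nonnegative, spherically symmetric, $\operatorname{supp}\mathring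 f\subset B(r_0)\times B(u_0)$, satisfying $8\pi\int_0^r s^2\int_{\mathbb R^3}\mathring f(s,v)\sqrt{1+|v|^2}\,dv\,ds<r$ for all $r>0$, and such that $(\mathring\lambda,\mathring e)$ (with the corresponding $\mathring\mu$) is a regular solution of the constraint equations with $\|\mathring\lambda\|_{L^\infty}\le\Lambda$. *)

(* Defs.v *)
From Stdlib Require Import Reals.
From Coquelicot Require Import Coquelicot.
Open Scope R_scope.

Definition R3 : Type := (R * R * R)%type.
Definition c1 (x : R3) : R := fst (fst x).
Definition c2 (x : R3) : R := snd (fst x).
Definition c3 (x : R3) : R := snd x.
Definition dot3 (x y : R3) : R := c1 x * c1 y + c2 x * c2 y + c3 x * c3 y.
Definition norm3 (x : R3) : R := sqrt (dot3 x x).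

Definition mat3 : Type := nat -> nat -> R.
Definition mapply (A : mat3) (x : R3) : R3 :=
  (A 0%nat 0%nat * c1 x + A 0%nat 1%nat * c2 x + A 0%nat 2%nat * c3 x,
   A 1%nat 0%nat * c1 x + A 1%nat 1%nat * c2 x + A 1%nat 2%nat * c3 x,
   A 2%nat 0%nat * c1 x + A 2%nat 1%nat * c2 x + A 2%nat 2%nat * c3 x).
Definition det3 (A : mat3) : R :=
  A 0%nat 0%nat * (A 1%nat 1%nat * A 2%nat 2%nat - A 1%nat 2%nat * A 2%nat 1%nat)
  - A 0%nat 1%nat * (A 1%nat 0%nat * A 2%nat 2%nat - A 1%nat 2%nat * A 2%nat 0%nat)
  + A 0%nat 2%nat * (A 1%nat 0%nat * A 2%nat 1%nat - A 1%nat 1%nat * A 2%nat 0%nat).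
Definition in_SO3 (A : mat3) : Prop :=
  (forall i j : nat, (i < 3)%nat -> (j < 3)%nat ->
     A 0%nat i * A 0%nat j + A 1%nat i * A 1%nat j + A 2%nat i * A 2%nat j
     = if Nat.eqb i j then 1 else 0)
  /\ det3 A = 1.

Definition spherically_symmetric (h : R3 -> R3 -> R) : Prop :=
  forall A : mat3, in_SO3 A -> forall x v : R3, h (mapply A x) (mapply A v) = h x v.

Definition get6 (i : nat) (p : R3 * R3) : R :=
  match i with
  | 0%nat => c1 (fst p) | 1%nat => c2 (fst p) | 2%nat => c3 (fst p)
  | 3%nat => c1 (snd p) | 4%nat => c2 (snd p) | _ => c3 (snd p)
  end.
Definition set6 (i : nat) (p : R3 * R3) (t : R) : R3 * R3 :=
  let '((x1, x2, x3), (v1, v2, v3)) := p in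
  match i with
  | 0%nat => ((t, x2, x3), (v1, v2, v3))
  | 1%nat => ((x1, t, x3), (v1, v2, v3))
  | 2%nat => ((x1, x2, t), (v1, v2, v3))
  | 3%nat => ((x1, x2, x3), (t, v2, v3))
  | 4%nat => ((x1, x2, x3), (v1, t, v3))
  | _ => ((x1, x2, x3), (v1, v2, t))
  end.
Definition partial6 (i : nat) (h : R3 * R3 -> R) (p : R3 * R3) : R :=
  Derive (fun t => h (set6 i p t)) (get6 i p).

Fixpoint Ck6 (k : nat) (h : R3 * R3 -> R) : Prop :=
  (forall p : R3 * R3, continuous h p) /\
  match k with
  | 0%nat => True
  | S k' => forall i : nat, (i < 6)%nat ->
       (forall p : R3 * R3, ex_derive (fun t => h (set6 i p t)) (get6 i p))
       /\ Ck6 k' (partial6 i h)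
  end.
Definition smooth6 (f : R3 -> R3 -> R) : Prop :=
  forall k : nat, Ck6 k (fun p => f (fst p) (snd p)).

Definition dist3 (x y : R3) : R :=
  sqrt ((c1 x - c1 y) ^ 2 + (c2 x - c2 y) ^ 2 + (c3 x - c3 y) ^ 2).

Definition in_support (f : R3 -> R3 -> R) (x v : R3) : Prop :=
  forall eps : R, 0 < eps -> exists x' v' : R3,
    f x' v' <> 0 /\ dist3 x x' < eps /\ dist3 v v' < eps.

Definition support_in (f : R3 -> R3 -> R) (r0 u0 : R) : Prop :=
  forall x v : R3, in_support f x v -> norm3 x < r0 /\ norm3 v < u0.

Definition int3 (h : R3 -> R) : R :=
  RInt_gen (fun a =>
    RInt_gen (fun b =>
      RInt_gen (fun c => h (a, b, c))
        (Rbar_locally m_infty) (Rbar_locally p_infty))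
      (Rbar_locally m_infty) (Rbar_locally p_infty))
    (Rbar_locally m_infty) (Rbar_locally p_infty).

(** By spherical symmetry, quantities at radius r are evaluated at x = (r,0,0). *)
Definition xr (r : R) : R3 := (r, 0, 0).

Definition kin_density (f : R3 -> R3 -> R) (r : R) : R :=
  int3 (fun v => f (xr r) v * sqrt (1 + dot3 v v)).
Definition kin_pressure (f : R3 -> R3 -> R) (r : R) : R :=
  int3 (fun v => (dot3 (xr r) v / r) ^ 2 * f (xr r) v / sqrt (1 + dot3 v v)).
Definition charge_density (f : R3 -> R3 -> R) (r : R) : R :=
  int3 (fun v => f (xr r) v).

Definition rho (f : R3 -> R3 -> R) (lam e : R -> R) (r : R) : R :=
  kin_density f r + / 2 * exp (2 * lam r) * (e r) ^ 2.
Definition pres (f : R3 -> R3 -> R) (lam e : R -> R) (r : R) : R :=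
  kin_pressure f r - / 2 * exp (2 * lam r) * (e r) ^ 2.

Definition C1_half (h : R -> R) : Prop :=
  exists dh : R -> R,
    (forall r, 0 < r -> is_derive h r (dh r)) /\
    filterlim (fun s => (h s - h 0) / s) (at_right 0) (locally (dh 0)) /\
    (forall r, 0 <= r ->
       filterlim dh (within (fun s => 0 <= s) (locally r)) (locally (dh r))).

Definition regular_solution (q : R) (f : R3 -> R3 -> R) (lam mu e : R -> R) : Prop :=
  (forall r, 0 < r ->
     exp (-2 * lam r) * (2 * r * Derive lam r - 1) + 1
       = 8 * PI * r ^ 2 * rho f lam e r) /\
  (forall r, 0 < r ->
     exp (-2 * lam r) * (2 * r * Derive mu r - 1) + 1
       = 8 * PI * r ^ 2 * pres f lam e r) /\
  (forall r, 0 < r ->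
     Derive (fun s => s ^ 2 * exp (lam s) * e s) r
       = q * r ^ 2 * exp (lam r) * charge_density f r) /\
  (forall r, 0 <= r -> 0 <= lam r) /\
  (forall r, 0 <= r -> mu r <= 0) /\
  C1_half lam /\ C1_half mu /\ C1_half e /\
  is_lim lam p_infty 0 /\ is_lim mu p_infty 0 /\ lam 0 = 0 /\
  is_lim e p_infty 0 /\ e 0 = 0.

(** Sup norms (L^oo norms of continuous functions), valued in Rbar *)
Definition sup6 (h : R3 -> R3 -> R) : Rbar :=
  Lub_Rbar (fun y => exists x v : R3, y = Rabs (h x v)).
Definition sup_half (h : R -> R) : Rbar :=
  Lub_Rbar (fun y => exists r : R, 0 <= r /\ y = Rabs (h r)).

Definition in_D (q r0 u0 Lam : R) (f : R3 -> R3 -> R) (lam e : R -> R) : Prop :=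
  smooth6 f /\
  (forall x v, 0 <= f x v) /\
  spherically_symmetric f /\
  support_in f r0 u0 /\
  (forall r, 0 < r ->
     8 * PI * RInt (fun s => s ^ 2 * kin_density f s) 0 r < r) /\
  (exists mu : R -> R, regular_solution q f lam mu e) /\
  Rbar_le (sup_half lam) (Finite Lam).

(* Main.v *)
From Pilot Require Import Defs.
From Stdlib Require Import Reals Lra Psatz Classical ClassicalEpsilon FunctionalExtensionality.
From Coquelicot Require Import Coquelicot.
Import Pilot.Defs.
Open Scope R_scope.

Lemma CL (F G dF dG : R -> R) (a b : R) : a < b ->
  (forall s, a < s <= b -> is_derive F s (dF s)) ->
  (forall s, a < s <= b -> is_derive G s (dG s)) ->
  (forall eps, 0 < eps -> exists del, 0 < del /\ forall s, a < s < a + del -> Rabs (F s - F a) < eps) ->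
  (forall eps, 0 < eps -> exists del, 0 < del /\ forall s, a < s < a + del -> Rabs (G s - G a) < eps) ->
  (forall s, a < s <= b -> dF s <= dG s) ->
  F b - F a <= G b - G a.
Proof.
  intros Hab HF HG RF RG Hd.
  apply Rle_plus_epsilon; intros eps Heps.
  destruct (RF (eps/2)) as [d1 [Hd1 P1]]; [lra|].
  destruct (RG (eps/2)) as [d2 [Hd2 P2]]; [lra|].
  set (eta := a + Rmin (Rmin d1 d2) (b - a) / 2).
  assert (Hm1 : Rmin (Rmin d1 d2) (b - a) <= d1) by (unfold Rmin; repeat destruct Rle_dec; lra).
  assert (Hm2 : Rmin (Rmin d1 d2) (b - a) <= d2) by (unfold Rmin; repeat destruct Rle_dec; lra).
  assert (Hm3 : Rmin (Rmin d1 d2) (b - a) <= b - a) by (unfold Rmin; repeat destruct Rle_dec; lra).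
  assert (Hm4 : 0 < Rmin (Rmin d1 d2) (b - a)) by (unfold Rmin; repeat destruct Rle_dec; lra).
  assert (He1 : a < eta < b) by (unfold eta; lra).
  destruct (MVT_gen (fun x => G x - F x) eta b (fun x => dG x - dF x)) as [c [Hc1 Hc2]].
  - intros x Hx. rewrite Rmin_left in Hx by lra. rewrite Rmax_right in Hx by lra.
    apply (is_derive_minus G F); [apply HG | apply HF]; lra.
  - intros x Hx. rewrite Rmin_left in Hx by lra. rewrite Rmax_right in Hx by lra.
    apply continuity_pt_filterlim. apply (continuous_minus G F);
    apply ex_derive_continuous; eexists; [apply HG | apply HF]; lra.
  - rewrite Rmin_left in Hc1 by lra. rewrite Rmax_right in Hc1 by lra.
    assert (0 <= (dG c - dF c) * (b - eta)).
    { apply Rmult_le_pos; [|lra]. assert (dF c <= dG c) by (apply Hd; lra). lra. }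
    specialize (P1 eta ltac:(unfold eta; lra)).
    specialize (P2 eta ltac:(unfold eta; lra)).
    apply Rabs_def2 in P1. apply Rabs_def2 in P2. lra.
Qed.

Lemma CLabs (F G dF dG : R -> R) (a b : R) : a < b ->
  (forall s, a < s <= b -> is_derive F s (dF s)) ->
  (forall s, a < s <= b -> is_derive G s (dG s)) ->
  (forall eps, 0 < eps -> exists del, 0 < del /\ forall s, a < s < a + del -> Rabs (F s - F a) < eps) ->
  (forall eps, 0 < eps -> exists del, 0 < del /\ forall s, a < s < a + del -> Rabs (G s - G a) < eps) ->
  (forall s, a < s <= b -> Rabs (dF s) <= dG s) ->
  Rabs (F b - F a) <= G b - G a.
Proof.
  intros Hab HF HG RF RG Hd.
  apply Rabs_le; split.
  - assert (H := CL (fun x => - F x) G (fun x => - dF x) dG a b Hab).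
    assert ((- F b) - (- F a) <= G b - G a); [|lra].
    apply H; auto.
    + intros s Hs. apply (is_derive_opp F). auto.
    + intros eps Heps. destruct (RF eps Heps) as [d [Hd0 Hd1]]. exists d; split; auto.
      intros s Hs. specialize (Hd1 s Hs). rewrite <- Rabs_Ropp. replace (- (- F s - - F a)) with (F s - F a) by ring. auto.
    + intros s Hs. specialize (Hd s Hs). apply Rabs_le_between in Hd. lra.
  - apply CL with dF dG; auto.
    intros s Hs. specialize (Hd s Hs). apply Rabs_le_between in Hd. lra.
Qed.

Lemma ballR (x e y : R) : ball x e y <-> Rabs (y - x) < e.
Proof. split; intro H; exact H. Qed.

Lemma cont_slice (T : UniformSpace) (F : T -> R -> R) p c :
  continuous (fun z : T * R => F (fst z) (snd z)) (p, c) ->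
  continuous (F p) c.
Proof.
  intro H. apply (continuous_comp_2 (fun _ : R => p) (fun x : R => x) F c);
  [apply continuous_const | apply continuous_id | exact H].
Qed.

Lemma LL (T : UniformSpace) (F : T -> R -> R) (u : R) : 0 < u ->
  (forall p c, continuous (fun z : T * R => F (fst z) (snd z)) (p, c)) ->
  forall p0, continuous (fun p => RInt (F p) (-u) u) p0.
Proof.
  intros Hu HC p0.
  apply filterlim_locally. intros eps.
  assert (He1 : 0 < eps / (8 * u)) by (apply Rdiv_lt_0_compat; [apply cond_pos | lra]).
  set (e1 := mkposreal _ He1).
  assert (Hd : forall c : R, exists d : posreal, forall z, ball (p0, c) d z ->
     ball (F p0 c) e1 (F (fst z) (snd z))).
  { intro c. specialize (HC p0 c). apply filterlim_locally with (eps := e1) in HC.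
    destruct HC as [d Hd]. exists d. exact Hd. }
  set (delta := fun c => proj1_sig (constructive_indefinite_description _ (Hd c))).
  assert (Hdelta : forall c z, ball (p0, c) (delta c) z -> ball (F p0 c) e1 (F (fst z) (snd z))).
  { intros c. unfold delta. destruct (constructive_indefinite_description _ (Hd c)) as [d Hd']. exact Hd'. }
  destruct (compactness_value_1d (-u) u delta) as [d Hcomp].
  exists d. intros p Hp.
  assert (Hpt : forall x, -u <= x <= u -> Rabs (F p x - F p0 x) <= 2 * e1).
  { intros x Hx. apply NNPP. intro Hn. apply (Hcomp x Hx). intros [t [Ht1 [Ht2 Ht3]]].
    apply Hn.
    assert (B1 := Hdelta t (p, x)). assert (B2 := Hdelta t (p0, x)).
    simpl in B1, B2.
    assert (Bx : ball t (delta t) x).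
    { apply ballR. exact Ht2. }
    assert (A1 : ball (F p0 t) e1 (F p x)).
    { apply B1. split; [apply ball_le with d; auto | exact Bx]. }
    assert (A2 : ball (F p0 t) e1 (F p0 x)).
    { apply B2. split; [apply ball_center | exact Bx]. }
    apply ballR in A1. apply ballR in A2.
    apply Rabs_def2 in A1. apply Rabs_def2 in A2. apply Rabs_le. unfold minus, plus, opp in A1, A2; simpl in *. lra. }
  assert (Ex : forall p', ex_RInt (F p') (-u) u).
  { intro p'. apply (@ex_RInt_continuous R_CompleteNormedModule). intros z _. apply cont_slice. apply HC. }
  apply ballR.
  assert (Hm := RInt_minus (F p) (F p0) (-u) u (Ex p) (Ex p0)).
  change (minus (RInt (F p) (- u) u) (RInt (F p0) (- u) u)) with
    (RInt (F p) (- u) u - RInt (F p0) (- u) u) in Hm.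
  rewrite <- Hm.
  assert (Hb := abs_RInt_le_const (fun x => minus (F p x) (F p0 x)) (-u) u (2 * e1)
      ltac:(lra) (ex_RInt_minus _ _ _ _ (Ex p) (Ex p0)) Hpt).
  eapply Rle_lt_trans; [exact Hb|]. simpl. unfold e1; simpl.
  replace ((u - - u) * (2 * (eps / (8 * u)))) with (eps / 2) by (field; lra). destruct eps as [eps Heps]; simpl in *. lra.
Qed.

Lemma RInt_zero_on (g : R -> R) a b : (forall x, Rmin a b < x < Rmax a b -> g x = 0) -> RInt g a b = 0.
Proof.
  intro H. rewrite (RInt_ext g (fun _ => 0)); auto.
  rewrite RInt_const. simpl. unfold scal; simpl. unfold mult; simpl. ring.
Qed.

Lemma RG (g : R -> R) (u : R) : 0 < u -> (forall a b, ex_RInt g a b) ->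
  (forall x, u <= Rabs x -> g x = 0) ->
  RInt_gen g (Rbar_locally m_infty) (Rbar_locally p_infty) = RInt g (-u) u.
Proof.
  intros Hu Hex Hz.
  apply is_RInt_gen_unique.
  intros P [eps HP].
  apply Filter_prod with (fun a => a < -u) (fun b => u < b).
  - exists (-u). auto.
  - exists u. auto.
  - intros a b Ha Hb. exists (RInt g a b). split.
    + apply (RInt_correct g a b (Hex a b)).
    + apply HP. 
      assert (E : RInt g a b = RInt g (-u) u).
      { rewrite <- (RInt_Chasles g a (-u) b) by auto.
        rewrite <- (RInt_Chasles g (-u) u b) by auto.
        rewrite (RInt_zero_on g a (-u)).
        2:{ intros x Hx. apply Hz. rewrite Rmin_left in Hx by lra. rewrite Rmax_right in Hx by lra.
            rewrite Rabs_left by lra. lra. }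
        rewrite (RInt_zero_on g u b).
        2:{ intros x Hx. apply Hz. rewrite Rmin_left in Hx by lra. rewrite Rmax_right in Hx by lra.
            rewrite Rabs_right by lra. lra. }
        unfold plus; simpl. ring. }
      simpl. rewrite E. apply ball_center.
Qed.

Lemma RB (g1 g2 : R -> R) (u B : R) : 0 < u -> ex_RInt g1 (-u) u -> ex_RInt g2 (-u) u ->
  (forall x, -u <= x <= u -> Rabs (g1 x - g2 x) <= B) ->
  Rabs (RInt g1 (-u) u - RInt g2 (-u) u) <= 2 * u * B.
Proof.
  intros Hu E1 E2 H.
  assert (Hm := RInt_minus g1 g2 (-u) u E1 E2).
  change (minus (RInt g1 (- u) u) (RInt g2 (- u) u)) with
    (RInt g1 (- u) u - RInt g2 (- u) u) in Hm.
  rewrite <- Hm.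
  assert (Hb := abs_RInt_le_const (fun x => minus (g1 x) (g2 x)) (-u) u B
      ltac:(lra) (ex_RInt_minus _ _ _ _ E1 E2) H).
  replace (2 * u * B) with ((u - - u) * B) by ring. exact Hb.
Qed.

Definition I1 (H : R -> R3 -> R) (u : R) (p : R * R * R) : R :=
  RInt (fun c => H (fst (fst p)) (snd (fst p), snd p, c)) (-u) u.
Definition I2 (H : R -> R3 -> R) (u : R) (p : R * R) : R :=
  RInt (fun b => I1 H u (p, b)) (-u) u.
Definition I3 (H : R -> R3 -> R) (u : R) (t : R) : R :=
  RInt (fun a => I2 H u (t, a)) (-u) u.

Definition Hcont (H : R -> R3 -> R) : Prop := forall t a b c,
  continuous (fun z : R * R * R * R => H (fst (fst (fst z))) (snd (fst (fst z)), snd (fst z), snd z)) (t, a, b, c).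
Definition Hzero (H : R -> R3 -> R) (u : R) : Prop := forall t v,
  (u <= Rabs (Defs.c1 v) \/ u <= Rabs (Defs.c2 v) \/ u <= Rabs (Defs.c3 v)) -> H t v = 0.

Lemma I1_cont H u : 0 < u -> Hcont H -> forall p, continuous (I1 H u) p.
Proof.
  intros Hu HC. apply (LL _ (fun p c => H (fst (fst p)) (snd (fst p), snd p, c)) u Hu).
  intros [[t a] b] c. apply (HC t a b c).
Qed.

Lemma I2_cont H u : 0 < u -> Hcont H -> forall p, continuous (I2 H u) p.
Proof.
  intros Hu HC. apply (LL _ (fun p b => I1 H u (p, b)) u Hu).
  intros p c. apply continuous_ext with (I1 H u).
  - intros [x y]. reflexivity.
  - apply I1_cont; auto.
Qed.

Lemma I3_cont H u : 0 < u -> Hcont H -> forall t, continuous (I3 H u) t.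
Proof.
  intros Hu HC. apply (LL _ (fun t a => I2 H u (t, a)) u Hu).
  intros p c. apply continuous_ext with (I2 H u).
  - intros [x y]. reflexivity.
  - apply I2_cont; auto.
Qed.

Lemma exR (g : R -> R) : (forall x, continuous g x) -> forall a b, ex_RInt g a b.
Proof. intros Hg a b. apply (@ex_RInt_continuous R_CompleteNormedModule). intros; apply Hg. Qed.

Lemma slice1 H : Hcont H -> forall t a b, forall c, continuous (fun c => H t (a, b, c)) c.
Proof. intros HC t a b c. apply (cont_slice _ (fun p c => H (fst (fst p)) (snd (fst p), snd p, c)) ((t,a),b) c).
  apply (HC t a b c). Qed.

Lemma slice2 H u : 0 < u -> Hcont H -> forall t a b, continuous (fun b => I1 H u (t, a, b)) b.
Proof. intros Hu HC t a b. apply (cont_slice _ (fun p b => I1 H u (p, b)) (t,a) b).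
  apply continuous_ext with (I1 H u). intros [x y]; reflexivity. apply I1_cont; auto. Qed.

Lemma slice3 H u : 0 < u -> Hcont H -> forall t a, continuous (fun a => I2 H u (t, a)) a.
Proof. intros Hu HC t a. apply (cont_slice _ (fun p b => I2 H u (p, b)) t a).
  apply continuous_ext with (I2 H u). intros [x y]; reflexivity. apply I2_cont; auto. Qed.

Lemma int3_I3 H u : 0 < u -> Hcont H -> Hzero H u -> forall t, int3 (H t) = I3 H u t.
Proof.
  intros Hu HC HZ t. unfold int3, I3.
  rewrite <- (RG (fun a => I2 H u (t, a)) u Hu).
  2:{ apply exR. intro; apply slice3; auto. }
  2:{ intros a Ha. unfold I2. apply RInt_zero_on. intros b _. unfold I1.
      apply RInt_zero_on. intros c _. apply HZ. simpl. auto. }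
  f_equal. apply functional_extensionality. intro a.
  unfold I2. rewrite <- (RG (fun b => I1 H u (t, a, b)) u Hu).
  2:{ apply exR. intro; apply slice2; auto. }
  2:{ intros b Hb. unfold I1. apply RInt_zero_on. intros c _. apply HZ. simpl. auto. }
  f_equal. apply functional_extensionality. intro b.
  unfold I1. simpl. apply RG; [exact Hu | apply exR; intro; apply slice1; auto | intros c Hc; apply HZ; simpl; auto].
Qed.

Lemma I3_diff H1 H2 u B : 0 < u -> Hcont H1 -> Hcont H2 ->
  (forall t v, Rabs (H1 t v - H2 t v) <= B) ->
  forall t, Rabs (I3 H1 u t - I3 H2 u t) <= 2 * u * (2 * u * (2 * u * B)).
Proof.
  intros Hu C1 C2 HB t. unfold I3. apply RB; auto.
  1,2: apply exR; intro; apply slice3; auto.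
  intros a _. unfold I2. apply RB; auto.
  1,2: apply exR; intro; apply slice2; auto.
  intros b _. unfold I1. apply RB; auto.
  1,2: apply exR; intro; apply slice1; auto.
Qed.

Lemma supp_zero f r0 u0 : support_in f r0 u0 -> forall x v, (r0 <= norm3 x \/ u0 <= norm3 v) -> f x v = 0.
Proof.
  intros Hs x v Hn. apply NNPP; intro Hf.
  assert (Hi : in_support f x v).
  { intros eps Heps. exists x, v. unfold dist3.
    replace ((Defs.c1 x - Defs.c1 x) ^ 2 + (Defs.c2 x - Defs.c2 x) ^ 2 + (Defs.c3 x - Defs.c3 x) ^ 2) with 0 by ring.
    replace ((Defs.c1 v - Defs.c1 v) ^ 2 + (Defs.c2 v - Defs.c2 v) ^ 2 + (Defs.c3 v - Defs.c3 v) ^ 2) with 0 by ring.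
    rewrite sqrt_0. auto. }
  destruct (Hs x v Hi). lra.
Qed.

Lemma norm3_ge v : Rabs (Defs.c1 v) <= norm3 v /\ Rabs (Defs.c2 v) <= norm3 v /\ Rabs (Defs.c3 v) <= norm3 v.
Proof.
  unfold norm3, dot3.
  repeat split; rewrite <- sqrt_Rsqr_abs; apply sqrt_le_1_alt; unfold Rsqr;
  nra.
Qed.

Lemma norm3_xr t : norm3 (xr t) = Rabs t.
Proof. unfold norm3, dot3, xr, Defs.c1, Defs.c2, Defs.c3; simpl.
  rewrite <- sqrt_Rsqr_abs. f_equal. unfold Rsqr. ring. Qed.

Lemma pr1 z : continuous (fun z : R * R * R * R => fst (fst (fst z))) z.
Proof. apply filterlim_locally. intro eps. exists eps. intros z' Hz'.
  destruct z as [[[t a] b] c]; destruct z' as [[[t' a'] b'] c']. simpl in *. destruct Hz' as [[[H1 H2] H3] H4]; assumption. Qed.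
Lemma pr2 z : continuous (fun z : R * R * R * R => snd (fst (fst z))) z.
Proof. apply filterlim_locally. intro eps. exists eps. intros z' Hz'.
  destruct z as [[[t a] b] c]; destruct z' as [[[t' a'] b'] c']. destruct Hz' as [[[H1 H2] H3] H4]; assumption. Qed.
Lemma pr3 z : continuous (fun z : R * R * R * R => snd (fst z)) z.
Proof. apply filterlim_locally. intro eps. exists eps. intros z' Hz'.
  destruct z as [[[t a] b] c]; destruct z' as [[[t' a'] b'] c']. destruct Hz' as [[[H1 H2] H3] H4]; assumption. Qed.
Lemma pr4 z : continuous (fun z : R * R * R * R => snd z) z.
Proof. apply filterlim_locally. intro eps. exists eps. intros z' Hz'.
  destruct z as [[[t a] b] c]; destruct z' as [[[t' a'] b'] c']. destruct Hz' as [[[H1 H2] H3] H4]; assumption. Qed.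

Lemma mapc z : continuous (fun z : R * R * R * R =>
   (xr (fst (fst (fst z))), (snd (fst (fst z)), snd (fst z), snd z))) z.
Proof. apply filterlim_locally. intro eps. exists eps. intros z' Hz'.
  destruct z as [[[t a] b] c]; destruct z' as [[[t' a'] b'] c']. simpl in *.
  unfold xr. destruct Hz' as [[[H1 H2] H3] H4].
  repeat split; try assumption; apply ball_center. Qed.

Lemma Hm_cont f : smooth6 f -> Hcont (fun t v => f (xr t) v).
Proof.
  intros Hs t a b c. destruct (Hs 0%nat) as [Hc _].
  exact (continuous_comp _ (fun p : R3 * R3 => f (fst p) (snd p)) (t,a,b,c) (mapc _) (Hc _)).
Qed.

Lemma w_cont z : continuous (fun z : R * R * R * R =>
   sqrt (1 + dot3 (snd (fst (fst z)), snd (fst z), snd z) (snd (fst (fst z)), snd (fst z), snd z))) z.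
Proof.
  apply (continuous_comp (fun z : R*R*R*R => 1 + dot3 (snd (fst (fst z)), snd (fst z), snd z) (snd (fst (fst z)), snd (fst z), snd z)) sqrt).
  - unfold dot3, Defs.c1, Defs.c2, Defs.c3; simpl.
    apply (continuous_plus (fun _ => 1)). apply continuous_const.
    apply (continuous_plus (fun z : R*R*R*R => snd (fst (fst z)) * snd (fst (fst z)) + snd (fst z) * snd (fst z))).
    apply (continuous_plus (fun z : R*R*R*R => snd (fst (fst z)) * snd (fst (fst z)))).
    apply (continuous_mult (fun z : R*R*R*R => snd (fst (fst z)))); apply pr2.
    apply (continuous_mult (fun z : R*R*R*R => snd (fst z))); apply pr3.
    apply (continuous_mult (fun z : R*R*R*R => snd z)); apply pr4.
  - apply continuity_pt_filterlim. apply continuity_pt_sqrt.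
    unfold dot3. nra.
Qed.

Lemma Hk_cont f : smooth6 f -> Hcont (fun t v => f (xr t) v * sqrt (1 + dot3 v v)).
Proof.
  intros Hs t a b c.
  apply (continuous_mult (fun z : R*R*R*R => f (xr (fst (fst (fst z)))) (snd (fst (fst z)), snd (fst z), snd z))).
  - apply Hm_cont; auto.
  - apply w_cont.
Qed.

Lemma Hm_zero f r0 u0 : support_in f r0 u0 -> Hzero (fun t v => f (xr t) v) u0.
Proof.
  intros Hs t v Hv. apply (supp_zero f r0 u0 Hs). right.
  destruct (norm3_ge v) as [A [B C]]. lra.
Qed.

Lemma Hk_zero f r0 u0 : support_in f r0 u0 -> Hzero (fun t v => f (xr t) v * sqrt (1 + dot3 v v)) u0.
Proof.
  intros Hs t v Hv. rewrite (Hm_zero f r0 u0 Hs t v Hv). ring.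
Qed.

Definition RCont (F : R -> R) (a : R) : Prop :=
  forall eps, 0 < eps -> exists del, 0 < del /\ forall s, a < s < a + del -> Rabs (F s - F a) < eps.

Lemma RC_lin (F : R -> R) a : (exists d0 A, 0 < d0 /\ forall s, a < s < a + d0 -> Rabs (F s - F a) <= A * (s - a)) -> RCont F a.
Proof.
  intros [d0 [A [Hd0 HA]]] eps Heps.
  exists (Rmin d0 (eps / (Rabs A + 1))). split.
  - apply Rmin_pos; auto. apply Rdiv_lt_0_compat; auto. pose proof (Rabs_pos A); lra.
  - intros s Hs. assert (Hm1 := Rmin_l d0 (eps / (Rabs A + 1))). assert (Hm2 := Rmin_r d0 (eps / (Rabs A + 1))).
    specialize (HA s ltac:(lra)). eapply Rle_lt_trans; [exact HA|].
    assert (A * (s - a) <= Rabs A * (s - a)) by (apply Rmult_le_compat_r; [lra | apply Rle_abs]).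
    assert (Rabs A * (s - a) < eps).
    { pose proof (Rabs_pos A).
      assert (s - a < eps / (Rabs A + 1)) by lra.
      apply Rmult_lt_compat_l with (r := Rabs A + 1) in H1; [|lra].
      replace ((Rabs A + 1) * (eps / (Rabs A + 1))) with eps in H1 by (field; lra). nra. }
    lra.
Qed.

Lemma RC_cont (F : R -> R) a : continuous F a -> RCont F a.
Proof.
  intros Hc eps Heps. apply filterlim_locally with (eps := mkposreal eps Heps) in Hc.
  destruct Hc as [d Hd]. exists d. split; [apply cond_pos|].
  intros s Hs. apply (Hd s). change (Rabs (s - a) < d). rewrite Rabs_right; lra.
Qed.

Lemma RC_const c a : RCont (fun _ => c) a.
Proof. intros eps Heps. exists 1. split; [lra|]. intros. rewrite Rminus_diag, Rabs_R0. auto. Qed.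

Lemma RC_plus F G a : RCont F a -> RCont G a -> RCont (fun x => F x + G x) a.
Proof.
  intros HF HG eps Heps. destruct (HF (eps/2)) as [d1 [H1 P1]]; [lra|]. destruct (HG (eps/2)) as [d2 [H2 P2]]; [lra|].
  exists (Rmin d1 d2). split. apply Rmin_pos; auto.
  intros s Hs. assert (Hm1 := Rmin_l d1 d2). assert (Hm2 := Rmin_r d1 d2).
  specialize (P1 s ltac:(lra)). specialize (P2 s ltac:(lra)).
  replace (F s + G s - (F a + G a)) with ((F s - F a) + (G s - G a)) by ring.
  eapply Rle_lt_trans; [apply Rabs_triang|]. lra.
Qed.

Lemma RC_scal k F a : RCont F a -> RCont (fun x => k * F x) a.
Proof.
  intros HF eps Heps. destruct (HF (eps/(Rabs k + 1))) as [d1 [H1 P1]].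
  { apply Rdiv_lt_0_compat; auto. pose proof (Rabs_pos k); lra. }
  exists d1. split; auto. intros s Hs. specialize (P1 s Hs).
  replace (k * F s - k * F a) with (k * (F s - F a)) by ring. rewrite Rabs_mult.
  pose proof (Rabs_pos k). pose proof (Rabs_pos (F s - F a)).
  apply Rmult_lt_compat_l with (r := Rabs k + 1) in P1; [|lra].
  replace ((Rabs k + 1) * (eps / (Rabs k + 1))) with eps in P1 by (field; lra). nra.
Qed.

Lemma exp_lip x y L : x <= L -> y <= L -> Rabs (exp x - exp y) <= exp L * Rabs (x - y).
Proof.
  intros Hx Hy.
  assert (Key : forall a b, b <= a -> a <= L -> exp a - exp b <= exp L * (a - b)).
  { intros a b Hba HaL. assert (H1 := exp_ineq1_le (b - a)).
    assert (exp b = exp a * exp (b - a)) by (rewrite <- exp_plus; f_equal; ring).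
    assert (exp a <= exp L) by (apply exp_le_3 || (destruct (Req_dec a L); [subst; lra| left; apply exp_increasing; lra])).
    assert (0 < exp a) by apply exp_pos. nra. }
  destruct (Rle_dec y x).
  - rewrite Rabs_right by (assert (exp y <= exp x) by (destruct (Req_dec x y); [subst; lra|left; apply exp_increasing; lra]); lra).
    rewrite Rabs_right by lra. apply Key; lra.
  - rewrite Rabs_left1 by (assert (exp x <= exp y) by (left; apply exp_increasing; lra); lra).
    rewrite Rabs_left1 by lra. assert (H := Key y x ltac:(lra) Hy). lra.
Qed.

Lemma exp_inv_lip x y L : 0 <= x <= L -> 0 <= y <= L ->
  Rabs (x - y) <= exp (2 * L) / 2 * Rabs (exp (-2 * x) - exp (-2 * y)).
Proof.
  intros Hx Hy.
  assert (Key : forall a b, 0 <= b <= a -> a <= L -> a - b <= exp (2 * L) / 2 * (exp (-2 * b) - exp (-2 * a))).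
  { intros a b Hb HaL.
    assert (H1 := exp_ineq1_le (2 * (a - b))).
    assert (exp (-2 * b) = exp (-2 * a) * exp (2 * (a - b))) by (rewrite <- exp_plus; f_equal; ring).
    assert (E1 : exp (2 * L) * exp (-2 * a) >= 1).
    { rewrite <- exp_plus. rewrite <- exp_0. destruct (Req_dec a L); [subst; right; f_equal; ring|].
      left. apply exp_increasing. lra. }
    assert (0 < exp (-2 * a)) by apply exp_pos. assert (0 < exp (2*L)) by apply exp_pos. nra. }
  assert (0 < exp (2*L)) by apply exp_pos.
  destruct (Rle_dec y x).
  - rewrite Rabs_right by lra. assert (HK := Key x y ltac:(lra) ltac:(lra)).
    rewrite Rabs_minus_sym.
    assert (exp (-2 * y) - exp (-2 * x) <= Rabs (exp (-2 * y) - exp (-2 * x))) by apply Rle_abs.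
    assert (exp (2 * L) / 2 * (exp (-2 * y) - exp (-2 * x)) <= exp (2 * L) / 2 * Rabs (exp (-2 * y) - exp (-2 * x))) by (apply Rmult_le_compat_l; lra).
    lra.
  - rewrite Rabs_left1 by lra. assert (HK := Key y x ltac:(lra) ltac:(lra)).
    assert (exp (-2 * x) - exp (-2 * y) <= Rabs (exp (-2 * x) - exp (-2 * y))) by apply Rle_abs.
    assert (exp (2 * L) / 2 * (exp (-2 * x) - exp (-2 * y)) <= exp (2 * L) / 2 * Rabs (exp (-2 * x) - exp (-2 * y))) by (apply Rmult_le_compat_l; lra).
    lra.
Qed.

Definition Sol (q r0 Lam BM : R) (lam e dl M kin : R -> R) : Prop :=
  (forall r, 0 <= r -> 0 <= lam r <= Lam) /\
  (forall r, 0 < r -> is_derive lam r (dl r)) /\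
  (forall r, 0 < r -> exp (-2 * lam r) * (2 * r * dl r - 1) + 1
       = 8 * PI * r ^ 2 * (kin r + / 2 * exp (2 * lam r) * (e r) ^ 2)) /\
  (forall r, 0 < r -> is_derive (fun s => s ^ 2 * exp (lam s) * e s) r (q * r ^ 2 * exp (lam r) * M r)) /\
  lam 0 = 0 /\ e 0 = 0 /\
  (exists del K, 0 < del /\ forall s, 0 < s < del -> Rabs (e s) <= K * s /\ Rabs (lam s) <= K * s) /\
  (forall r, r0 <= r -> kin r = 0 /\ M r = 0) /\
  (forall r, 0 <= r -> Rabs (M r) <= BM).

Definition Pf (lam e : R -> R) := fun s => s ^ 2 * exp (lam s) * e s.
Definition mf (lam : R -> R) := fun s => s * (1 - exp (-2 * lam s)).

Lemma lam_rc q r0 Lam BM lam e dl M kin : Sol q r0 Lam BM lam e dl M kin -> RCont lam 0.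
Proof.
  intros (H1 & H2 & H3 & H4 & H5 & H6 & [del [K [Hdel HK]]] & H8 & H9).
  apply RC_lin. exists del, K. split; auto. intros s Hs. rewrite H5. rewrite Rminus_0_r.
  replace (s - 0) with s by ring. apply HK. lra.
Qed.

Lemma der_cont (f : R -> R) x l : is_derive f x l -> continuous f x.
Proof. intro H. apply (@ex_derive_continuous R_AbsRing R_NormedModule). exists l. exact H. Qed.

Lemma der_const (c x : R) : is_derive (fun _ : R => c) x 0.
Proof. exact (is_derive_const c x). Qed.

Lemma lam_cont q r0 Lam BM lam e dl M kin : Sol q r0 Lam BM lam e dl M kin -> forall r, 0 < r -> continuous lam r.
Proof. intros (H1 & H2 & _) r Hr. apply der_cont with (dl r). auto. Qed.

Lemma P_der q r0 Lam BM lam e dl M kin : Sol q r0 Lam BM lam e dl M kin ->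
  forall r, 0 < r -> is_derive (Pf lam e) r (q * r ^ 2 * exp (lam r) * M r).
Proof. intros (H1 & H2 & H3 & H4 & _) r Hr. apply H4; auto. Qed.

Lemma P_zero lam e : Pf lam e 0 = 0.
Proof. unfold Pf. ring. Qed.

Lemma P_rc q r0 Lam BM lam e dl M kin : Sol q r0 Lam BM lam e dl M kin -> RCont (Pf lam e) 0.
Proof.
  intros (H1 & H2 & H3 & H4 & H5 & H6 & [del [K [Hdel HK]]] & H8 & H9).
  apply RC_lin. exists del, (del ^ 2 * exp Lam * K). split; auto. intros s Hs.
  rewrite P_zero, Rminus_0_r. replace (s - 0) with s by ring. unfold Pf.
  destruct (HK s ltac:(lra)) as [He _]. destruct (H1 s ltac:(lra)) as [Hl1 Hl2].
  rewrite Rabs_mult, Rabs_mult. rewrite (Rabs_right (s ^ 2)) by (apply Rle_ge; apply pow2_ge_0).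
  rewrite (Rabs_right (exp (lam s))) by (left; apply exp_pos).
  assert (exp (lam s) <= exp Lam) by (destruct (Req_dec (lam s) Lam) as [->|]; [lra| left; apply exp_increasing; lra]).
  assert (s ^ 2 <= del ^ 2) by (apply pow_incr; lra).
  assert (0 < exp (lam s)) by apply exp_pos. pose proof (Rabs_pos (e s)).
  assert (0 <= K) by (pose proof (Rabs_pos (e s)); nra).
  assert (s ^ 2 * exp (lam s) <= del ^ 2 * exp Lam) by (apply Rmult_le_compat; try lra; apply pow2_ge_0).
  assert (0 <= s^2) by apply pow2_ge_0.
  apply Rle_trans with (del ^ 2 * exp Lam * Rabs (e s)).
  - apply Rmult_le_compat_r; auto.
  - replace (del ^ 2 * exp Lam * K * s) with (del ^ 2 * exp Lam * (K * s)) by ring.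
    apply Rmult_le_compat_l; auto. assert (0 < exp Lam) by apply exp_pos. nra.
Qed.

Lemma P_bound q r0 Lam BM lam e dl M kin : Sol q r0 Lam BM lam e dl M kin ->
  forall r, 0 < r -> Rabs (Pf lam e r) <= Rabs q * exp Lam * BM / 3 * r ^ 3.
Proof.
  intros HS r Hr.
  assert (Hc : Rabs (Pf lam e r - Pf lam e 0) <= Rabs q * exp Lam * BM / 3 * r ^ 3 - Rabs q * exp Lam * BM / 3 * 0 ^ 3).
  2:{ replace (Pf lam e r - Pf lam e 0) with (Pf lam e r) in Hc by (unfold Pf; ring). replace (0 ^ 3) with 0 in Hc by ring. lra. }
  apply (CLabs (Pf lam e) (fun s => Rabs q * exp Lam * BM / 3 * s ^ 3) (fun s => q * s ^ 2 * exp (lam s) * M s) (fun s => Rabs q * exp Lam * BM * s ^ 2) 0 r Hr).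
  - intros s Hs. apply (P_der _ _ _ _ _ _ _ _ _ HS). lra.
  - intros s Hs. auto_derive; auto. field.
  - apply (P_rc _ _ _ _ _ _ _ _ _ HS).
  - apply (RC_cont (fun s => Rabs q * exp Lam * BM / 3 * s ^ 3) 0). apply der_cont with (Rabs q * exp Lam * BM * 0 ^ 2). auto_derive; auto; field.
  - intros s Hs. destruct HS as (H1 & H2 & H3 & H4 & H5 & H6 & H7 & H8 & H9).
    rewrite !Rabs_mult. rewrite (Rabs_right (s ^ 2)) by (apply Rle_ge; apply pow2_ge_0).
    rewrite (Rabs_right (exp (lam s))) by (left; apply exp_pos).
    destruct (H1 s ltac:(lra)).
    assert (exp (lam s) <= exp Lam) by (destruct (Req_dec (lam s) Lam) as [->|]; [lra| left; apply exp_increasing; lra]).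
    specialize (H9 s ltac:(lra)). pose proof (Rabs_pos q). pose proof (Rabs_pos (M s)).
    assert (0 <= s ^ 2) by apply pow2_ge_0. assert (0 < exp (lam s)) by apply exp_pos.
    assert (Rabs q * s ^ 2 * exp (lam s) <= Rabs q * s ^ 2 * exp Lam) by (apply Rmult_le_compat_l; nra).
    assert (0 <= Rabs q * s ^ 2 * exp (lam s)) by (apply Rmult_le_pos; [apply Rmult_le_pos|]; lra).
    assert (Rabs q * s ^ 2 * exp (lam s) * Rabs (M s) <= Rabs q * s ^ 2 * exp Lam * BM) by
      (apply Rmult_le_compat; nra).
    nra.
Qed.

Lemma P_const q r0 Lam BM lam e dl M kin : 0 < r0 -> Sol q r0 Lam BM lam e dl M kin ->
  forall r, r0 <= r -> Pf lam e r = Pf lam e r0.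
Proof.
  intros Hr0 HS r Hr. destruct (Req_dec r r0) as [->|Hne]; auto.
  assert (Hc := CLabs (Pf lam e) (fun _ => 0) (fun s => q * s ^ 2 * exp (lam s) * M s) (fun _ => 0) r0 r ltac:(lra)).
  assert (Rabs (Pf lam e r - Pf lam e r0) <= 0 - 0).
  { apply Hc.
    - intros s Hs. apply (P_der _ _ _ _ _ _ _ _ _ HS). lra.
    - intros s Hs. apply der_const.
    - apply (RC_cont (Pf lam e)). eapply der_cont. apply (P_der _ _ _ _ _ _ _ _ _ HS). lra.
    - apply RC_const.
    - intros s Hs. destruct HS as (H1 & H2 & H3 & H4 & H5 & H6 & H7 & H8 & H9).
      destruct (H8 s ltac:(lra)) as [_ ->]. rewrite Rmult_0_r, Rabs_R0. lra. }
  pose proof (Rabs_pos (Pf lam e r - Pf lam e r0)).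
  assert (Rabs (Pf lam e r - Pf lam e r0) = 0) by lra.
  apply Rabs_eq_0 in H1. lra.
Qed.

Lemma m_der q r0 Lam BM lam e dl M kin : Sol q r0 Lam BM lam e dl M kin ->
  forall r, 0 < r -> is_derive (mf lam) r (8 * PI * r ^ 2 * kin r + 4 * PI * r ^ 2 * (exp (lam r) * e r) ^ 2).
Proof.
  intros (H1 & H2 & H3 & H4 & _) r Hr.
  assert (Hd : is_derive (mf lam) r ((1 - exp (-2 * lam r)) + r * (2 * dl r * exp (-2 * lam r)))).
  { unfold mf. auto_derive. exists (dl r); apply H2; auto.
    replace (Derive (fun x : R => lam x) r) with (dl r) by (symmetry; apply is_derive_unique; apply H2; auto). ring. }
  replace (8 * PI * r ^ 2 * kin r + 4 * PI * r ^ 2 * (exp (lam r) * e r) ^ 2) with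
    ((1 - exp (-2 * lam r)) + r * (2 * dl r * exp (-2 * lam r))); auto.
  specialize (H3 r Hr).
  replace ((exp (lam r) * e r) ^ 2) with (exp (2 * lam r) * (e r) ^ 2).
  2:{ replace (2 * lam r) with (lam r + lam r) by ring. rewrite exp_plus. ring. }
  lra.
Qed.

Lemma m_rc q r0 Lam BM lam e dl M kin : Sol q r0 Lam BM lam e dl M kin -> RCont (mf lam) 0.
Proof.
  intros (H1 & _). apply RC_lin. exists 1, 1. split; [lra|]. intros s Hs.
  unfold mf. replace (0 * (1 - exp (-2 * lam 0))) with 0 by ring. rewrite !Rminus_0_r.
  destruct (H1 s ltac:(lra)).
  assert (exp (-2 * lam s) <= 1) by (rewrite <- exp_0; destruct (Req_dec (lam s) 0) as [E|]; [rewrite E; right; f_equal; ring| left; apply exp_increasing; lra]).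
  assert (0 < exp (-2 * lam s)) by apply exp_pos.
  rewrite Rabs_right by nra. nra.
Qed.

Lemma ballI (x e y : R) : ball x e y -> x - e < y < x + e.
Proof. intro H. apply ballR in H. apply Rabs_def2 in H. unfold minus, plus, opp in H; simpl in H. lra. Qed.

Lemma cont_ext0 (F : R -> R) : RCont F 0 -> (forall s, 0 < s -> continuous F s) ->
  forall t, continuous (fun t => F (Rmax 0 t)) t.
Proof.
  intros HR HC t. apply filterlim_locally. intro eps.
  destruct (Rlt_dec 0 t) as [Ht|Ht].
  - specialize (HC t Ht). apply filterlim_locally with (eps := eps) in HC.
    destruct HC as [d1 Hd1].
    assert (Hp : 0 < Rmin d1 t) by (apply Rmin_pos; [apply cond_pos|lra]).
    exists (mkposreal _ Hp). intros y Hy. simpl in Hy. apply ballI in Hy.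
    assert (Hm1 := Rmin_l d1 t). assert (Hm2 := Rmin_r d1 t).
    simpl in Hy.
    rewrite (Rmax_right 0 t) by lra. rewrite (Rmax_right 0 y) by lra.
    apply Hd1. apply ballR. apply Rabs_def1; lra.
  - destruct (Rlt_dec t 0) as [Ht'|Ht'].
    + assert (Hp : 0 < - t) by lra.
      exists (mkposreal _ Hp). intros y Hy. simpl in Hy. apply ballI in Hy. simpl in Hy.
      rewrite (Rmax_left 0 t) by lra. rewrite (Rmax_left 0 y) by lra. apply ball_center.
    + assert (t = 0) by lra. subst t.
      destruct (HR eps (cond_pos eps)) as [del [Hdel Hd]].
      exists (mkposreal _ Hdel). intros y Hy. simpl in Hy. apply ballI in Hy. simpl in Hy.
      rewrite (Rmax_left 0 0) by lra. apply ballR.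
      destruct (Rle_dec y 0).
      * rewrite (Rmax_left 0 y) by lra. rewrite Rminus_diag, Rabs_R0. apply cond_pos.
      * rewrite (Rmax_right 0 y) by lra. apply Hd. lra.
Qed.

Definition phi (dl : R -> R) := fun t => Rabs (dl (Rmax 0 t)).
Definition Vf (dl : R -> R) := fun r => RInt (phi dl) 0 r.

Lemma phi_cont dl : RCont dl 0 -> (forall s, 0 < s -> continuous dl s) -> forall t, continuous (phi dl) t.
Proof.
  intros HR HC t. unfold phi.
  apply (continuous_comp (fun t => dl (Rmax 0 t)) Rabs).
  - apply cont_ext0; auto.
  - apply continuous_Rabs.
Qed.

Lemma V_der dl : RCont dl 0 -> (forall s, 0 < s -> continuous dl s) ->
  forall r, is_derive (Vf dl) r (phi dl r).
Proof.
  intros HR HC r. unfold Vf.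
  apply (is_derive_RInt (phi dl) (RInt (phi dl) 0) 0 r).
  - apply filter_forall. intro b. apply (@RInt_correct R_CompleteNormedModule). apply exR. apply phi_cont; auto.
  - apply phi_cont; auto.
Qed.

Lemma V_zero dl : Vf dl 0 = 0.
Proof. unfold Vf. rewrite RInt_point. reflexivity. Qed.

Lemma V_mono dl : RCont dl 0 -> (forall s, 0 < s -> continuous dl s) ->
  forall s r, 0 <= s <= r -> 0 <= Vf dl s <= Vf dl r.
Proof.
  intros HR HC s r Hsr. unfold Vf.
  assert (Ex := exR (phi dl) (phi_cont dl HR HC)).
  assert (P1 : 0 <= RInt (phi dl) 0 s) by (apply RInt_ge_0; auto; [lra| intros; apply Rabs_pos]).
  assert (P2 : 0 <= RInt (phi dl) s r) by (apply RInt_ge_0; auto; [lra| intros; apply Rabs_pos]).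
  rewrite <- (RInt_Chasles (phi dl) 0 s r) by auto. change (plus ?a ?b) with (a + b). lra.
Qed.

Lemma phi_pos dl s : 0 < s -> phi dl s = Rabs (dl s).
Proof. intro H. unfold phi. rewrite Rmax_right by lra. reflexivity. Qed.

Lemma abs_mul_le a b A B : Rabs a <= A -> Rabs b <= B -> Rabs (a * b) <= A * B.
Proof. intros. rewrite Rabs_mult. apply Rmult_le_compat; auto; apply Rabs_pos. Qed.

Lemma exp_le_L x L : x <= L -> exp x <= exp L.
Proof. intro. destruct (Req_dec x L) as [->|]; [lra| left; apply exp_increasing; lra]. Qed.

Lemma RC_minus F G a : RCont F a -> RCont G a -> RCont (fun x => F x - G x) a.
Proof.
  intros HF HG. assert (H := RC_plus F (fun x => -1 * G x) a HF (RC_scal (-1) G a HG)).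
  intros eps Heps. destruct (H eps Heps) as [d [Hd P]]. exists d; split; auto.
  intros s Hs. specialize (P s Hs). replace (F s - G s - (F a - G a)) with (F s + -1 * G s - (F a + -1 * G a)) by ring. auto.
Qed.

Definition Hyp q r0 Lam BM Kk KM (lf ef dlf Mf kf lg eg dlg Mg kg : R -> R) d :=
  0 <= d /\ Sol q r0 Lam BM lf ef dlf Mf kf /\ Sol q r0 Lam BM lg eg dlg Mg kg /\
  (forall r, 0 <= r -> Rabs (kf r - kg r) <= Kk * d) /\ (forall r, 0 <= r -> Rabs (Mf r - Mg r) <= KM * d).

Lemma dl_rc q r0 Lam BM Kk KM lf ef dlf Mf kf lg eg dlg Mg kg d :
  Hyp q r0 Lam BM Kk KM lf ef dlf Mf kf lg eg dlg Mg kg d ->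
  RCont (fun s => lf s - lg s) 0 /\ (forall s, 0 < s -> continuous (fun s => lf s - lg s) s).
Proof.
  intros (Hd & Sf & Sg & _). split.
  - apply RC_minus; [apply (lam_rc _ _ _ _ _ _ _ _ _ Sf) | apply (lam_rc _ _ _ _ _ _ _ _ _ Sg)].
  - intros s Hs. apply (continuous_minus lf lg);
    [apply (lam_cont _ _ _ _ _ _ _ _ _ Sf) | apply (lam_cont _ _ _ _ _ _ _ _ _ Sg)]; auto.
Qed.

Lemma dP_der_bound q r0 Lam BM Kk KM lf ef dlf Mf kf lg eg dlg Mg kg d :
  Hyp q r0 Lam BM Kk KM lf ef dlf Mf kf lg eg dlg Mg kg d ->
  forall s, 0 < s ->
  Rabs (q * s ^ 2 * exp (lf s) * Mf s - q * s ^ 2 * exp (lg s) * Mg s)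
   <= Rabs q * s ^ 2 * (exp Lam * (KM * d) + BM * (exp Lam * Rabs (lf s - lg s))).
Proof.
  intros (Hd & Sf & Sg & Hk & HM) s Hs.
  destruct Sf as (F1 & _). destruct Sg as (G1 & _ & _ & _ & _ & _ & _ & _ & G9).
  destruct (F1 s ltac:(lra)). destruct (G1 s ltac:(lra)).
  replace (q * s ^ 2 * exp (lf s) * Mf s - q * s ^ 2 * exp (lg s) * Mg s) with
    ((q * s ^ 2) * (exp (lf s) * (Mf s - Mg s) + Mg s * (exp (lf s) - exp (lg s)))) by ring.
  apply abs_mul_le.
  - rewrite Rabs_mult. rewrite (Rabs_right (s ^ 2)) by (apply Rle_ge, pow2_ge_0). lra.
  - eapply Rle_trans; [apply Rabs_triang|]. apply Rplus_le_compat.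
    + apply abs_mul_le. rewrite Rabs_right by (left; apply exp_pos). apply exp_le_L; lra. apply HM; lra.
    + apply abs_mul_le. apply G9; lra. apply exp_lip; lra.
Qed.

Lemma S1 q r0 Lam BM Kk KM lf ef dlf Mf kf lg eg dlg Mg kg d : 0 < r0 ->
  Hyp q r0 Lam BM Kk KM lf ef dlf Mf kf lg eg dlg Mg kg d ->
  forall r, 0 < r <= r0 ->
  Rabs (Pf lf ef r - Pf lg eg r) <=
    (Rabs q * r0 ^ 2 * exp Lam * KM * d) * r + (Rabs q * r0 ^ 2 * exp Lam * BM) * Vf (fun s => lf s - lg s) r.
Proof.
  intros Hr0 HH r Hr.
  destruct (dl_rc _ _ _ _ _ _ _ _ _ _ _ _ _ _ _ _ _ HH) as [DR DC].
  assert (HH' := HH). destruct HH' as (Hd & Sf & Sg & Hk & HM).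
  set (A := Rabs q * r0 ^ 2 * exp Lam * KM * d). set (B := Rabs q * r0 ^ 2 * exp Lam * BM).
  set (dl := fun s => lf s - lg s).
  assert (Hc : Rabs ((Pf lf ef r - Pf lg eg r) - (Pf lf ef 0 - Pf lg eg 0)) <= (A * r + B * Vf dl r) - (A * 0 + B * Vf dl 0)).
  2:{ rewrite !P_zero, V_zero in Hc. replace (Pf lf ef r - Pf lg eg r - (0 - 0)) with (Pf lf ef r - Pf lg eg r) in Hc by ring. lra. }
  apply (CLabs (fun s => Pf lf ef s - Pf lg eg s) (fun s => A * s + B * Vf dl s)
     (fun s => q * s ^ 2 * exp (lf s) * Mf s - q * s ^ 2 * exp (lg s) * Mg s)
     (fun s => A + B * phi dl s) 0 r ltac:(lra)).
  - intros s Hs. apply (is_derive_minus (Pf lf ef) (Pf lg eg));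
    [apply (P_der _ _ _ _ _ _ _ _ _ Sf) | apply (P_der _ _ _ _ _ _ _ _ _ Sg)]; lra.
  - intros s Hs. assert (HV := V_der dl DR DC s). auto_derive.
    + exists (phi dl s). exact HV.
    + replace (Derive (fun x : R => Vf dl x) s) with (phi dl s) by (symmetry; apply is_derive_unique; exact HV). ring.
  - apply RC_minus; [apply (P_rc _ _ _ _ _ _ _ _ _ Sf) | apply (P_rc _ _ _ _ _ _ _ _ _ Sg)].
  - apply (RC_cont (fun s => A * s + B * Vf dl s)). apply der_cont with (A + B * phi dl 0).
    assert (HV := V_der dl DR DC 0). auto_derive.
    + exists (phi dl 0). exact HV.
    + replace (Derive (fun x : R => Vf dl x) 0) with (phi dl 0) by (symmetry; apply is_derive_unique; exact HV). ring.
  - intros s Hs. eapply Rle_trans; [apply (dP_der_bound _ _ _ _ _ _ _ _ _ _ _ _ _ _ _ _ _ HH); lra|].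
    rewrite phi_pos by lra. unfold A, B, dl.
    assert (s ^ 2 <= r0 ^ 2) by (apply pow_incr; lra).
    assert (0 <= exp Lam * (KM * d) + BM * (exp Lam * Rabs (lf s - lg s))).
    { assert (0 < exp Lam) by apply exp_pos. pose proof (Rabs_pos (lf s - lg s)).
      destruct Sg as (_ & _ & _ & _ & _ & _ & _ & _ & G9). specialize (G9 s ltac:(lra)). pose proof (Rabs_pos (Mg s)).
      assert (0 <= KM * d) by (destruct (Rle_dec 0 KM); [nra|]; pose proof (HM s ltac:(lra)); pose proof (Rabs_pos (Mf s - Mg s)); nra).
      apply Rplus_le_le_0_compat; [nra|]. apply Rmult_le_pos; [lra|]. nra. }
    pose proof (Rabs_pos q).
    apply Rle_trans with (Rabs q * r0 ^ 2 * (exp Lam * (KM * d) + BM * (exp Lam * Rabs (lf s - lg s)))).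
    + apply Rmult_le_compat_r; auto. apply Rmult_le_compat_l; auto.
    + right. ring.
Qed.

Lemma E_of_P lam e r : 0 < r -> exp (lam r) * e r = Pf lam e r / r ^ 2.
Proof. intro. unfold Pf. field. lra. Qed.

Lemma Eb q r0 Lam BM lam e dl M kin : 0 < r0 -> Sol q r0 Lam BM lam e dl M kin ->
  forall r, 0 < r -> Rabs (exp (lam r) * e r) <= Rabs q * exp Lam * BM / 3 * Rmin r r0.
Proof.
  intros Hr0 HS r Hr. rewrite E_of_P by auto.
  set (c := Rabs q * exp Lam * BM / 3).
  assert (Hc0 : 0 <= c).
  { unfold c. destruct HS as (_ & _ & _ & _ & _ & _ & _ & _ & H9). specialize (H9 0 ltac:(lra)).
    pose proof (Rabs_pos (M 0)). pose proof (Rabs_pos q). assert (0 < exp Lam) by apply exp_pos.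
    apply Rmult_le_pos; [|lra]. apply Rmult_le_pos; [nra|lra]. }
  assert (Hr2 : 0 < r ^ 2) by (apply pow_lt; auto).
  unfold Rdiv. rewrite Rabs_mult, (Rabs_right (/ r ^ 2)) by (left; apply Rinv_0_lt_compat; auto).
  destruct (Rle_dec r r0).
  - rewrite Rmin_left by auto.
    assert (H := P_bound _ _ _ _ _ _ _ _ _ HS r Hr). fold c in H.
    apply Rmult_le_compat_r with (r := / r ^ 2) in H; [|left; apply Rinv_0_lt_compat; auto].
    eapply Rle_trans; [exact H|]. right. field. lra.
  - rewrite Rmin_right by lra.
    rewrite (P_const _ _ _ _ _ _ _ _ _ Hr0 HS r) by lra.
    assert (H := P_bound _ _ _ _ _ _ _ _ _ HS r0 Hr0). fold c in H.
    apply Rmult_le_compat_r with (r := / r ^ 2) in H; [|left; apply Rinv_0_lt_compat; auto].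
    eapply Rle_trans; [exact H|].
    assert (r0 ^ 3 / r ^ 2 <= r0).
    { apply Rmult_le_reg_r with (r ^ 2); auto. unfold Rdiv. rewrite Rmult_assoc, Rinv_l by lra.
      replace (r0 ^ 3 * 1) with (r0 * r0 ^ 2) by ring. apply Rmult_le_compat_l; [lra|].
      apply pow_incr; lra. }
    replace (c * r0 ^ 3 * / r ^ 2) with (c * (r0 ^ 3 / r ^ 2)) by (unfold Rdiv; ring).
    apply Rmult_le_compat_l; auto.
Qed.

Lemma m_zero lam : mf lam 0 = 0.
Proof. unfold mf. ring. Qed.

Lemma S3 q r0 Lam BM Kk KM lf ef dlf Mf kf lg eg dlg Mg kg d :
  Hyp q r0 Lam BM Kk KM lf ef dlf Mf kf lg eg dlg Mg kg d ->
  forall r, 0 < r -> Rabs (lf r - lg r) <= exp (2 * Lam) / 2 * (Rabs (mf lf r - mf lg r) / r).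
Proof.
  intros (Hd & Sf & Sg & _) r Hr.
  destruct Sf as (F1 & _). destruct Sg as (G1 & _).
  eapply Rle_trans; [apply (exp_inv_lip _ _ Lam); [apply F1 | apply G1]; lra|].
  right. f_equal. unfold mf.
  replace (exp (-2 * lf r) - exp (-2 * lg r)) with (- ((r * (1 - exp (-2 * lf r)) - r * (1 - exp (-2 * lg r))) / r)) by (field; lra).
  rewrite Rabs_Ropp. unfold Rdiv. rewrite Rabs_mult, (Rabs_right (/ r)) by (left; apply Rinv_0_lt_compat; auto). reflexivity.
Qed.

Lemma c_nonneg q r0 Lam BM lam e dl M kin : Sol q r0 Lam BM lam e dl M kin -> 0 <= Rabs q * exp Lam * BM / 3.
Proof.
  intros HS. destruct HS as (_ & _ & _ & _ & _ & _ & _ & _ & H9). specialize (H9 0 ltac:(lra)).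
  pose proof (Rabs_pos (M 0)). pose proof (Rabs_pos q). assert (0 < exp Lam) by apply exp_pos.
  apply Rmult_le_pos; [|lra]. apply Rmult_le_pos; [nra|lra].
Qed.

Lemma S2 q r0 Lam BM Kk KM lf ef dlf Mf kf lg eg dlg Mg kg d : 0 < r0 -> 0 <= Kk -> 0 <= KM ->
  Hyp q r0 Lam BM Kk KM lf ef dlf Mf kf lg eg dlg Mg kg d ->
  forall r, 0 < r <= r0 ->
  Rabs (mf lf r - mf lg r) <= (8 * PI * Kk * d / 3) * r ^ 3 +
     (8 * PI * (Rabs q * exp Lam * BM / 3) * r0) *
     ((Rabs q * r0 ^ 2 * exp Lam * KM * d) * r + (Rabs q * r0 ^ 2 * exp Lam * BM) * Vf (fun s => lf s - lg s) r) * r.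
Proof.
  intros Hr0 HKk HKM HH r Hr.
  destruct (dl_rc _ _ _ _ _ _ _ _ _ _ _ _ _ _ _ _ _ HH) as [DR DC].
  assert (HH' := HH). destruct HH' as (Hd & Sf & Sg & Hk & HM).
  set (A := Rabs q * r0 ^ 2 * exp Lam * KM * d). set (B := Rabs q * r0 ^ 2 * exp Lam * BM).
  set (c := Rabs q * exp Lam * BM / 3).
  set (dl := fun s => lf s - lg s).
  set (K0 := (8 * PI * c * r0) * (A * r + B * Vf dl r)).
  assert (Hc0 : 0 <= c) by apply (c_nonneg _ _ _ _ _ _ _ _ _ Sf).
  assert (HBM : 0 <= BM) by (destruct Sf as (_ & _ & _ & _ & _ & _ & _ & _ & H9); pose proof (H9 0 ltac:(lra)); pose proof (Rabs_pos (Mf 0)); lra).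
  assert (HA : 0 <= A) by (unfold A; pose proof (Rabs_pos q); assert (0 < exp Lam) by apply exp_pos;
     repeat apply Rmult_le_pos; try lra; try apply pow2_ge_0; auto).
  assert (HB : 0 <= B) by (unfold B; pose proof (Rabs_pos q); assert (0 < exp Lam) by apply exp_pos;
     repeat apply Rmult_le_pos; try lra; try apply pow2_ge_0; auto).
  assert (Hc : Rabs ((mf lf r - mf lg r) - (mf lf 0 - mf lg 0)) <= ((8 * PI * Kk * d / 3) * r ^ 3 + K0 * r) - ((8 * PI * Kk * d / 3) * 0 ^ 3 + K0 * 0)).
  2:{ rewrite !m_zero in Hc. replace (mf lf r - mf lg r - (0 - 0)) with (mf lf r - mf lg r) in Hc by ring.
      replace ((8 * PI * Kk * d / 3) * r ^ 3 + K0 * r - ((8 * PI * Kk * d / 3) * 0 ^ 3 + K0 * 0)) with ((8 * PI * Kk * d / 3) * r ^ 3 + K0 * r) in Hc by ring. unfold K0 in Hc. exact Hc. }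
  apply (CLabs (fun s => mf lf s - mf lg s) (fun s => (8 * PI * Kk * d / 3) * s ^ 3 + K0 * s)
     (fun s => (8 * PI * s ^ 2 * kf s + 4 * PI * s ^ 2 * (exp (lf s) * ef s) ^ 2) - (8 * PI * s ^ 2 * kg s + 4 * PI * s ^ 2 * (exp (lg s) * eg s) ^ 2))
     (fun s => 8 * PI * Kk * d * s ^ 2 + K0) 0 r ltac:(lra)).
  - intros s Hs. apply (is_derive_minus (mf lf) (mf lg));
    [apply (m_der _ _ _ _ _ _ _ _ _ Sf) | apply (m_der _ _ _ _ _ _ _ _ _ Sg)]; lra.
  - intros s Hs. auto_derive; auto. field.
  - apply RC_minus; [apply (m_rc _ _ _ _ _ _ _ _ _ Sf) | apply (m_rc _ _ _ _ _ _ _ _ _ Sg)].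
  - apply (RC_cont (fun s => (8 * PI * Kk * d / 3) * s ^ 3 + K0 * s)). apply der_cont with K0.
    auto_derive; auto. field.
  - intros s Hs.
    set (Ef := exp (lf s) * ef s). set (Eg := exp (lg s) * eg s).
    assert (Hs2 : 0 < s ^ 2) by (apply pow_lt; lra).
    assert (h1 : Rabs (Ef - Eg) = Rabs (Pf lf ef s - Pf lg eg s) / s ^ 2).
    { unfold Ef, Eg. rewrite !E_of_P by lra. replace (Pf lf ef s / s ^ 2 - Pf lg eg s / s ^ 2) with ((Pf lf ef s - Pf lg eg s) * / s ^ 2) by (field; lra).
      rewrite Rabs_mult, (Rabs_right (/ s ^ 2)) by (left; apply Rinv_0_lt_compat; auto). reflexivity. }
    assert (h2 : Rabs (Ef + Eg) <= 2 * c * s).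
    { eapply Rle_trans; [apply Rabs_triang|].
      assert (E1 := Eb _ _ _ _ _ _ _ _ _ Hr0 Sf s ltac:(lra)).
      assert (E2 := Eb _ _ _ _ _ _ _ _ _ Hr0 Sg s ltac:(lra)). rewrite Rmin_left in E1, E2 by lra.
      fold c Ef in E1. fold c Eg in E2. lra. }
    assert (h3 : Rabs (Pf lf ef s - Pf lg eg s) <= A * s + B * Vf dl s) by (apply (S1 _ _ _ _ _ _ _ _ _ _ _ _ _ _ _ _ _ Hr0 HH); lra).
    destruct (V_mono dl DR DC s r ltac:(lra)) as [V1 V2].
    assert (h4 : A * s + B * Vf dl s <= A * r + B * Vf dl r) by nra.
    assert (h5 : Rabs (Ef ^ 2 - Eg ^ 2) <= 2 * c * s * (Rabs (Pf lf ef s - Pf lg eg s) / s ^ 2)).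
    { replace (Ef ^ 2 - Eg ^ 2) with ((Ef + Eg) * (Ef - Eg)) by ring. rewrite Rabs_mult, h1.
      apply Rmult_le_compat_r; auto. apply Rmult_le_pos. apply Rabs_pos. left; apply Rinv_0_lt_compat; auto. }
    assert (h6 : 4 * PI * s ^ 2 * Rabs (Ef ^ 2 - Eg ^ 2) <= K0).
    { assert (0 < PI) by apply PI_RGT_0.
      apply Rle_trans with (4 * PI * s ^ 2 * (2 * c * s * (Rabs (Pf lf ef s - Pf lg eg s) / s ^ 2))).
      - apply Rmult_le_compat_l; auto. nra.
      - replace (4 * PI * s ^ 2 * (2 * c * s * (Rabs (Pf lf ef s - Pf lg eg s) / s ^ 2))) with
          (8 * PI * c * s * Rabs (Pf lf ef s - Pf lg eg s)) by (field; lra).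
        unfold K0. pose proof (Rabs_pos (Pf lf ef s - Pf lg eg s)).
        assert (0 <= PI * c) by (apply Rmult_le_pos; lra).
        assert (8 * PI * c * s <= 8 * PI * c * r0) by nra.
        assert (0 <= 8 * PI * c * s) by nra.
        apply Rmult_le_compat; auto; lra. }
    assert (h7 : Rabs (kf s - kg s) <= Kk * d) by (apply Hk; lra).
    replace (8 * PI * s ^ 2 * kf s + 4 * PI * s ^ 2 * Ef ^ 2 - (8 * PI * s ^ 2 * kg s + 4 * PI * s ^ 2 * Eg ^ 2))
      with (8 * PI * s ^ 2 * (kf s - kg s) + 4 * PI * s ^ 2 * (Ef ^ 2 - Eg ^ 2)) by ring.
    eapply Rle_trans; [apply Rabs_triang|]. apply Rplus_le_compat.
    + assert (0 < PI) by apply PI_RGT_0. rewrite Rabs_mult. rewrite (Rabs_right (8 * PI * s ^ 2)) by nra.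
      replace (8 * PI * Kk * d * s ^ 2) with (8 * PI * s ^ 2 * (Kk * d)) by ring.
      apply Rmult_le_compat_l; nra.
    + assert (0 < PI) by apply PI_RGT_0. rewrite Rabs_mult. rewrite (Rabs_right (4 * PI * s ^ 2)) by nra. exact h6.
Qed.

Definition cc q Lam BM := Rabs q * exp Lam * BM / 3.
Definition A0 q r0 Lam KM := Rabs q * r0 ^ 2 * exp Lam * KM.
Definition BB q r0 Lam BM := Rabs q * r0 ^ 2 * exp Lam * BM.
Definition gam q r0 Lam BM := 8 * PI * cc q Lam BM * r0.
Definition kap1 q r0 Lam BM Kk KM := exp (2 * Lam) / 2 * (8 * PI * Kk / 3 * r0 ^ 2 + gam q r0 Lam BM * A0 q r0 Lam KM * r0).
Definition kap2 q r0 Lam BM := exp (2 * Lam) / 2 * (gam q r0 Lam BM * BB q r0 Lam BM).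

Lemma S4 q r0 Lam BM Kk KM lf ef dlf Mf kf lg eg dlg Mg kg d : 0 < r0 -> 0 <= Kk -> 0 <= KM ->
  Hyp q r0 Lam BM Kk KM lf ef dlf Mf kf lg eg dlg Mg kg d ->
  forall r, 0 < r <= r0 ->
  Rabs (lf r - lg r) <= kap1 q r0 Lam BM Kk KM * d + kap2 q r0 Lam BM * Vf (fun s => lf s - lg s) r.
Proof.
  intros Hr0 HKk HKM HH r Hr.
  destruct (dl_rc _ _ _ _ _ _ _ _ _ _ _ _ _ _ _ _ _ HH) as [DR DC].
  assert (HH' := HH). destruct HH' as (Hd & Sf & Sg & Hk & HM).
  assert (H3 := S3 _ _ _ _ _ _ _ _ _ _ _ _ _ _ _ _ _ HH r ltac:(lra)).
  assert (H2 := S2 _ _ _ _ _ _ _ _ _ _ _ _ _ _ _ _ _ Hr0 HKk HKM HH r Hr).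
  fold (cc q Lam BM) in H2. fold (A0 q r0 Lam KM) (BB q r0 Lam BM) in H2.
  set (V := Vf (fun s => lf s - lg s) r) in *.
  destruct (V_mono _ DR DC 0 r ltac:(lra)) as [V1 _]. rewrite V_zero in V1. fold V in V1.
  assert (Hc := c_nonneg _ _ _ _ _ _ _ _ _ Sf). fold (cc q Lam BM) in Hc.
  assert (HA : 0 <= A0 q r0 Lam KM) by (unfold A0; pose proof (Rabs_pos q); assert (0 < exp Lam) by apply exp_pos;
     repeat apply Rmult_le_pos; try lra; try apply pow2_ge_0; auto).
  assert (HBM : 0 <= BM) by (destruct Sf as (_ & _ & _ & _ & _ & _ & _ & _ & H9); pose proof (H9 0 ltac:(lra)); pose proof (Rabs_pos (Mf 0)); lra).
  assert (HB : 0 <= BB q r0 Lam BM) by (unfold BB; pose proof (Rabs_pos q); assert (0 < exp Lam) by apply exp_pos;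
     repeat apply Rmult_le_pos; try lra; try apply pow2_ge_0; auto).
  assert (HPI : 0 < PI) by apply PI_RGT_0.
  assert (Hg : 0 <= gam q r0 Lam BM) by (unfold gam; assert (0 <= PI * cc q Lam BM) by (apply Rmult_le_pos; lra); nra).
  assert (Hm : Rabs (mf lf r - mf lg r) / r <= (8 * PI * Kk / 3 * r0 ^ 2 + gam q r0 Lam BM * A0 q r0 Lam KM * r0) * d + gam q r0 Lam BM * BB q r0 Lam BM * V).
  { apply Rmult_le_reg_r with r; [lra|]. unfold Rdiv. rewrite Rmult_assoc, Rinv_l, Rmult_1_r by lra.
    eapply Rle_trans; [exact H2|]. unfold gam.
    assert (r ^ 2 <= r0 ^ 2) by (apply pow_incr; lra).
    assert (0 <= 8 * PI * Kk * d) by (assert (0 <= PI * Kk) by (apply Rmult_le_pos; lra); nra).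
    assert (0 <= 8 * PI * cc q Lam BM * r0) by (assert (0 <= PI * cc q Lam BM) by (apply Rmult_le_pos; lra); nra).
    assert (0 <= A0 q r0 Lam KM * d) by nra.
    assert (A0 q r0 Lam KM * d * r <= A0 q r0 Lam KM * d * r0) by (apply Rmult_le_compat_l; lra).
    replace (8 * PI * Kk * d / 3 * r ^ 3) with (8 * PI * Kk * d / 3 * r ^ 2 * r) by ring.
    assert (8 * PI * Kk * d / 3 * r ^ 2 <= 8 * PI * Kk * d / 3 * r0 ^ 2) by (apply Rmult_le_compat_l; lra).
    assert (8 * PI * cc q Lam BM * r0 * (A0 q r0 Lam KM * d * r) <= 8 * PI * cc q Lam BM * r0 * (A0 q r0 Lam KM * d * r0)) by (apply Rmult_le_compat_l; lra).
    nra. }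
  eapply Rle_trans; [exact H3|]. unfold kap1, kap2.
  assert (0 < exp (2 * Lam)) by apply exp_pos.
  apply Rle_trans with (exp (2 * Lam) / 2 * ((8 * PI * Kk / 3 * r0 ^ 2 + gam q r0 Lam BM * A0 q r0 Lam KM * r0) * d + gam q r0 Lam BM * BB q r0 Lam BM * V)).
  - apply Rmult_le_compat_l; [lra|exact Hm].
  - right. ring.
Qed.

Definition CV q r0 Lam BM Kk KM := exp ((kap2 q r0 Lam BM + 1) * r0) * kap1 q r0 Lam BM Kk KM / (kap2 q r0 Lam BM + 1).
Definition Cl0 q r0 Lam BM Kk KM := kap1 q r0 Lam BM Kk KM + kap2 q r0 Lam BM * CV q r0 Lam BM Kk KM.

Lemma kap_nonneg q r0 Lam BM Kk KM : 0 < r0 -> 0 <= BM -> 0 <= Kk -> 0 <= KM ->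
  0 <= kap1 q r0 Lam BM Kk KM /\ 0 <= kap2 q r0 Lam BM.
Proof.
  intros Hr0 HBM HKk HKM.
  assert (HPI : 0 < PI) by apply PI_RGT_0. pose proof (Rabs_pos q).
  assert (0 < exp Lam) by apply exp_pos. assert (0 < exp (2 * Lam)) by apply exp_pos.
  assert (Hc : 0 <= cc q Lam BM) by (unfold cc; apply Rmult_le_pos; [|lra]; apply Rmult_le_pos; [nra|lra]).
  assert (HA : 0 <= A0 q r0 Lam KM) by (unfold A0; repeat apply Rmult_le_pos; try lra; try apply pow2_ge_0; auto).
  assert (HB : 0 <= BB q r0 Lam BM) by (unfold BB; repeat apply Rmult_le_pos; try lra; try apply pow2_ge_0; auto).
  assert (Hg : 0 <= gam q r0 Lam BM) by (unfold gam; assert (0 <= PI * cc q Lam BM) by (apply Rmult_le_pos; lra); nra).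
  unfold kap1, kap2. split.
  - apply Rmult_le_pos; [lra|]. apply Rplus_le_le_0_compat.
    + assert (0 <= PI * Kk) by (apply Rmult_le_pos; lra). assert (0 <= r0 ^ 2) by apply pow2_ge_0. nra.
    + assert (0 <= gam q r0 Lam BM * A0 q r0 Lam KM) by (apply Rmult_le_pos; lra). nra.
  - apply Rmult_le_pos; [lra|]. apply Rmult_le_pos; lra.
Qed.

Lemma S5 q r0 Lam BM Kk KM lf ef dlf Mf kf lg eg dlg Mg kg d : 0 < r0 -> 0 <= Kk -> 0 <= KM ->
  Hyp q r0 Lam BM Kk KM lf ef dlf Mf kf lg eg dlg Mg kg d ->
  forall r, 0 < r <= r0 -> Vf (fun s => lf s - lg s) r <= CV q r0 Lam BM Kk KM * d.
Proof.
  intros Hr0 HKk HKM HH r Hr.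
  destruct (dl_rc _ _ _ _ _ _ _ _ _ _ _ _ _ _ _ _ _ HH) as [DR DC].
  assert (HH' := HH). destruct HH' as (Hd & Sf & Sg & Hk & HM).
  assert (HBM : 0 <= BM) by (destruct Sf as (_ & _ & _ & _ & _ & _ & _ & _ & H9); pose proof (H9 0 ltac:(lra)); pose proof (Rabs_pos (Mf 0)); lra).
  destruct (kap_nonneg q r0 Lam BM Kk KM Hr0 HBM HKk HKM) as [K1 K2].
  set (k1 := kap1 q r0 Lam BM Kk KM) in *. set (k2 := kap2 q r0 Lam BM + 1).
  set (dl := fun s => lf s - lg s).
  set (W := fun s => exp (- k2 * s) * (Vf dl s + k1 * d / k2)).
  set (dW := fun s => exp (- k2 * s) * phi dl s + (- k2) * exp (- k2 * s) * (Vf dl s + k1 * d / k2)).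
  assert (HW : forall s, is_derive W s (dW s)).
  { intro s. assert (HV := V_der dl DR DC s). unfold W, dW. auto_derive.
    - exists (phi dl s). exact HV.
    - replace (Derive (fun x : R => Vf dl x) s) with (phi dl s) by (symmetry; apply is_derive_unique; exact HV). ring. }
  assert (Hc : W r - W 0 <= (fun _ => 0) r - (fun _ => 0) 0).
  { apply (CL W (fun _ => 0) dW (fun _ => 0) 0 r ltac:(lra)).
    - intros; apply HW.
    - intros; apply der_const.
    - apply (RC_cont W). eapply der_cont. apply HW.
    - apply RC_const.
    - intros s Hs. unfold dW. rewrite phi_pos by lra.
      assert (H4 := S4 _ _ _ _ _ _ _ _ _ _ _ _ _ _ _ _ _ Hr0 HKk HKM HH s ltac:(lra)). fold k1 dl in H4.
      destruct (V_mono dl DR DC 0 s ltac:(lra)) as [_ V1]. rewrite V_zero in V1.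
      assert (0 < exp (- k2 * s)) by apply exp_pos.
      assert (Rabs (dl s) <= k1 * d + k2 * Vf dl s).
      { unfold k2. unfold dl in *. cbv beta in *. nra. }
      assert (Hk2 : 0 < k2) by (unfold k2; lra).
      replace (exp (- k2 * s) * Rabs (dl s) + - k2 * exp (- k2 * s) * (Vf dl s + k1 * d / k2))
        with (exp (- k2 * s) * (Rabs (dl s) - (k1 * d + k2 * Vf dl s))) by (field; lra).
      assert (Rabs (dl s) - (k1 * d + k2 * Vf dl s) <= 0) by lra. nra. }
  simpl in Hc. unfold W in Hc. rewrite V_zero in Hc. replace (- k2 * 0) with 0 in Hc by ring. rewrite exp_0 in Hc.
  assert (Hk2 : 0 < k2) by (unfold k2; lra).
  assert (E1 : exp (- k2 * r) * exp (k2 * r) = 1) by (rewrite <- exp_plus; replace (- k2 * r + k2 * r) with 0 by ring; apply exp_0).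
  assert (E2 : exp (k2 * r) <= exp (k2 * r0)) by (apply exp_le_L; nra).
  assert (0 < exp (k2 * r)) by apply exp_pos. assert (0 < exp (- k2 * r)) by apply exp_pos.
  assert (0 <= k1 * d / k2) by (apply Rmult_le_pos; [nra|left; apply Rinv_0_lt_compat; lra]).
  assert (Vf dl r + k1 * d / k2 <= exp (k2 * r) * (k1 * d / k2)).
  { apply Rmult_le_reg_l with (exp (- k2 * r)); auto.
    replace (exp (- k2 * r) * (exp (k2 * r) * (k1 * d / k2))) with (k1 * d / k2) by (rewrite <- Rmult_assoc, E1; ring). lra. }
  unfold CV. fold k1. fold k2.
  replace (exp (k2 * r0) * k1 / k2 * d) with (exp (k2 * r0) * (k1 * d / k2)) by (field; lra).
  assert (exp (k2 * r) * (k1 * d / k2) <= exp (k2 * r0) * (k1 * d / k2)) by (apply Rmult_le_compat_r; auto).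
  fold dl. lra.
Qed.

Lemma S6 q r0 Lam BM Kk KM lf ef dlf Mf kf lg eg dlg Mg kg d : 0 < r0 -> 0 <= Kk -> 0 <= KM ->
  Hyp q r0 Lam BM Kk KM lf ef dlf Mf kf lg eg dlg Mg kg d ->
  forall r, 0 <= r <= r0 -> Rabs (lf r - lg r) <= Cl0 q r0 Lam BM Kk KM * d.
Proof.
  intros Hr0 HKk HKM HH r Hr.
  assert (HH' := HH). destruct HH' as (Hd & Sf & Sg & Hk & HM).
  assert (HBM : 0 <= BM) by (destruct Sf as (_ & _ & _ & _ & _ & _ & _ & _ & H9); pose proof (H9 0 ltac:(lra)); pose proof (Rabs_pos (Mf 0)); lra).
  destruct (kap_nonneg q r0 Lam BM Kk KM Hr0 HBM HKk HKM) as [K1 K2].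
  assert (HCV : 0 <= CV q r0 Lam BM Kk KM).
  { unfold CV. apply Rmult_le_pos. apply Rmult_le_pos; [left; apply exp_pos|auto]. left; apply Rinv_0_lt_compat; lra. }
  destruct (Req_dec r 0) as [->|Hr0'].
  - destruct Sf as (_ & _ & _ & _ & F5 & _). destruct Sg as (_ & _ & _ & _ & G5 & _).
    rewrite F5, G5, Rminus_diag, Rabs_R0. unfold Cl0. apply Rmult_le_pos; auto. nra.
  - eapply Rle_trans; [apply (S4 _ _ _ _ _ _ _ _ _ _ _ _ _ _ _ _ _ Hr0 HKk HKM HH); lra|].
    assert (H5 := S5 _ _ _ _ _ _ _ _ _ _ _ _ _ _ _ _ _ Hr0 HKk HKM HH r ltac:(lra)).
    unfold Cl0. assert (kap2 q r0 Lam BM * Vf (fun s : R => lf s - lg s) r <= kap2 q r0 Lam BM * (CV q r0 Lam BM Kk KM * d)) by (apply Rmult_le_compat_l; auto).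
    nra.
Qed.

Definition a2 q r0 Lam BM Kk KM := Rabs q * exp Lam * (KM + BM * Cl0 q r0 Lam BM Kk KM) / 3.

Lemma Cl0_nonneg q r0 Lam BM Kk KM : 0 < r0 -> 0 <= BM -> 0 <= Kk -> 0 <= KM -> 0 <= Cl0 q r0 Lam BM Kk KM /\ 0 <= CV q r0 Lam BM Kk KM.
Proof.
  intros Hr0 HBM HKk HKM. destruct (kap_nonneg q r0 Lam BM Kk KM Hr0 HBM HKk HKM) as [K1 K2].
  assert (HCV : 0 <= CV q r0 Lam BM Kk KM).
  { unfold CV. apply Rmult_le_pos. apply Rmult_le_pos; [left; apply exp_pos|auto]. left; apply Rinv_0_lt_compat; lra. }
  unfold Cl0. split; auto. nra.
Qed.

Lemma a2_nonneg q r0 Lam BM Kk KM : 0 < r0 -> 0 <= BM -> 0 <= Kk -> 0 <= KM -> 0 <= a2 q r0 Lam BM Kk KM.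
Proof.
  intros. destruct (Cl0_nonneg q r0 Lam BM Kk KM) as [C1 _]; auto.
  unfold a2. pose proof (Rabs_pos q). assert (0 < exp Lam) by apply exp_pos.
  apply Rmult_le_pos; [|lra]. apply Rmult_le_pos; [nra|]. nra.
Qed.

Lemma S7 q r0 Lam BM Kk KM lf ef dlf Mf kf lg eg dlg Mg kg d : 0 < r0 -> 0 <= Kk -> 0 <= KM ->
  Hyp q r0 Lam BM Kk KM lf ef dlf Mf kf lg eg dlg Mg kg d ->
  forall r, 0 < r <= r0 -> Rabs (Pf lf ef r - Pf lg eg r) <= a2 q r0 Lam BM Kk KM * d * r ^ 3.
Proof.
  intros Hr0 HKk HKM HH r Hr.
  assert (HH' := HH). destruct HH' as (Hd & Sf & Sg & Hk & HM).
  assert (HBM : 0 <= BM) by (destruct Sf as (_ & _ & _ & _ & _ & _ & _ & _ & H9); pose proof (H9 0 ltac:(lra)); pose proof (Rabs_pos (Mf 0)); lra).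
  set (K := a2 q r0 Lam BM Kk KM * d).
  assert (Hc : Rabs ((Pf lf ef r - Pf lg eg r) - (Pf lf ef 0 - Pf lg eg 0)) <= K * r ^ 3 - K * 0 ^ 3).
  2:{ rewrite !P_zero in Hc. replace (Pf lf ef r - Pf lg eg r - (0 - 0)) with (Pf lf ef r - Pf lg eg r) in Hc by ring.
      replace (K * r ^ 3 - K * 0 ^ 3) with (K * r ^ 3) in Hc by ring. exact Hc. }
  apply (CLabs (fun s => Pf lf ef s - Pf lg eg s) (fun s => K * s ^ 3)
     (fun s => q * s ^ 2 * exp (lf s) * Mf s - q * s ^ 2 * exp (lg s) * Mg s)
     (fun s => 3 * K * s ^ 2) 0 r ltac:(lra)).
  - intros s Hs. apply (is_derive_minus (Pf lf ef) (Pf lg eg));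
    [apply (P_der _ _ _ _ _ _ _ _ _ Sf) | apply (P_der _ _ _ _ _ _ _ _ _ Sg)]; lra.
  - intros s Hs. auto_derive; auto. ring.
  - apply RC_minus; [apply (P_rc _ _ _ _ _ _ _ _ _ Sf) | apply (P_rc _ _ _ _ _ _ _ _ _ Sg)].
  - apply (RC_cont (fun s => K * s ^ 3)). apply der_cont with (3 * K * 0 ^ 2). auto_derive; auto. ring.
  - intros s Hs. eapply Rle_trans; [apply (dP_der_bound _ _ _ _ _ _ _ _ _ _ _ _ _ _ _ _ _ HH); lra|].
    assert (H6 := S6 _ _ _ _ _ _ _ _ _ _ _ _ _ _ _ _ _ Hr0 HKk HKM HH s ltac:(lra)).
    unfold K, a2.
    assert (0 < exp Lam) by apply exp_pos. pose proof (Rabs_pos q).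
    assert (0 <= s ^ 2) by apply pow2_ge_0.
    assert (BM * (exp Lam * Rabs (lf s - lg s)) <= BM * (exp Lam * (Cl0 q r0 Lam BM Kk KM * d))).
    { apply Rmult_le_compat_l; auto. apply Rmult_le_compat_l; lra. }
    assert (0 <= Rabs q * s ^ 2) by nra.
    apply Rle_trans with (Rabs q * s ^ 2 * (exp Lam * (KM * d) + BM * (exp Lam * (Cl0 q r0 Lam BM Kk KM * d)))).
    + apply Rmult_le_compat_l; lra.
    + right. field.
Qed.

Definition Cm0 q r0 Lam BM Kk KM := 8 * PI * Kk / 3 * r0 ^ 3 + gam q r0 Lam BM * (A0 q r0 Lam KM * r0 + BB q r0 Lam BM * CV q r0 Lam BM Kk KM) * r0.
Definition K6 q r0 Lam BM Kk KM := 8 * PI * cc q Lam BM * a2 q r0 Lam BM Kk KM * r0 ^ 6.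
Definition Cl1 q r0 Lam BM Kk KM := exp (2 * Lam) / 2 * ((Cm0 q r0 Lam BM Kk KM + K6 q r0 Lam BM Kk KM / r0) / r0).

Lemma S8 q r0 Lam BM Kk KM lf ef dlf Mf kf lg eg dlg Mg kg d : 0 < r0 -> 0 <= Kk -> 0 <= KM ->
  Hyp q r0 Lam BM Kk KM lf ef dlf Mf kf lg eg dlg Mg kg d ->
  forall r, r0 <= r -> Rabs (mf lf r - mf lg r) <= (Cm0 q r0 Lam BM Kk KM + K6 q r0 Lam BM Kk KM / r0) * d.
Proof.
  intros Hr0 HKk HKM HH r Hr.
  assert (HH' := HH). destruct HH' as (Hd & Sf & Sg & Hk & HM).
  assert (HBM : 0 <= BM) by (destruct Sf as (_ & _ & _ & _ & _ & _ & _ & _ & H9); pose proof (H9 0 ltac:(lra)); pose proof (Rabs_pos (Mf 0)); lra).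
  destruct (Cl0_nonneg q r0 Lam BM Kk KM) as [HC0 HCV]; auto.
  assert (Ha2 := a2_nonneg q r0 Lam BM Kk KM Hr0 HBM HKk HKM).
  assert (Hc0 := c_nonneg _ _ _ _ _ _ _ _ _ Sf). fold (cc q Lam BM) in Hc0.
  assert (HPI : 0 < PI) by apply PI_RGT_0.
  assert (Hm0 : Rabs (mf lf r0 - mf lg r0) <= Cm0 q r0 Lam BM Kk KM * d).
  { assert (H2 := S2 _ _ _ _ _ _ _ _ _ _ _ _ _ _ _ _ _ Hr0 HKk HKM HH r0 ltac:(lra)).
    assert (H5 := S5 _ _ _ _ _ _ _ _ _ _ _ _ _ _ _ _ _ Hr0 HKk HKM HH r0 ltac:(lra)).
    fold (cc q Lam BM) (A0 q r0 Lam KM) (BB q r0 Lam BM) in H2.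
    eapply Rle_trans; [exact H2|]. unfold Cm0, gam.
    assert (0 <= BB q r0 Lam BM) by (unfold BB; pose proof (Rabs_pos q); assert (0 < exp Lam) by apply exp_pos;
     repeat apply Rmult_le_pos; try lra; try apply pow2_ge_0; auto).
    assert (0 <= 8 * PI * cc q Lam BM * r0) by (assert (0 <= PI * cc q Lam BM) by (apply Rmult_le_pos; lra); nra).
    assert (BB q r0 Lam BM * Vf (fun s => lf s - lg s) r0 <= BB q r0 Lam BM * (CV q r0 Lam BM Kk KM * d)) by (apply Rmult_le_compat_l; auto).
    assert (8 * PI * cc q Lam BM * r0 * (A0 q r0 Lam KM * d * r0 + BB q r0 Lam BM * Vf (fun s => lf s - lg s) r0) <=
            8 * PI * cc q Lam BM * r0 * (A0 q r0 Lam KM * d * r0 + BB q r0 Lam BM * (CV q r0 Lam BM Kk KM * d))) by (apply Rmult_le_compat_l; lra).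
    assert (0 <= r0) by lra.
    assert (8 * PI * cc q Lam BM * r0 * (A0 q r0 Lam KM * d * r0 + BB q r0 Lam BM * Vf (fun s => lf s - lg s) r0) * r0 <=
            8 * PI * cc q Lam BM * r0 * (A0 q r0 Lam KM * d * r0 + BB q r0 Lam BM * (CV q r0 Lam BM Kk KM * d)) * r0) by (apply Rmult_le_compat_r; lra).
    apply Rle_trans with (8 * PI * Kk * d / 3 * r0 ^ 3 + 8 * PI * cc q Lam BM * r0 * (A0 q r0 Lam KM * d * r0 + BB q r0 Lam BM * (CV q r0 Lam BM Kk KM * d)) * r0).
    - lra.
    - right. field. }
  destruct (Req_dec r r0) as [->|Hne].
  { eapply Rle_trans; [exact Hm0|]. apply Rmult_le_compat_r; auto.
    assert (0 <= K6 q r0 Lam BM Kk KM / r0); [|lra]. unfold K6. apply Rmult_le_pos; [|left; apply Rinv_0_lt_compat; lra].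
    assert (0 <= PI * cc q Lam BM) by (apply Rmult_le_pos; lra). assert (0 <= r0 ^ 6) by (apply pow_le; lra).
    assert (0 <= 8 * PI * cc q Lam BM * a2 q r0 Lam BM Kk KM) by nra. nra. }
  set (K := K6 q r0 Lam BM Kk KM * d).
  assert (HK : 0 <= K).
  { unfold K, K6. assert (0 <= PI * cc q Lam BM) by (apply Rmult_le_pos; lra). assert (0 <= r0 ^ 6) by (apply pow_le; lra).
    assert (0 <= 8 * PI * cc q Lam BM * a2 q r0 Lam BM Kk KM) by nra. apply Rmult_le_pos; auto. nra. }
  assert (Hc : Rabs ((mf lf r - mf lg r) - (mf lf r0 - mf lg r0)) <= (- K / r) - (- K / r0)).
  { apply (CLabs (fun s => mf lf s - mf lg s) (fun s => - K / s)
     (fun s => (8 * PI * s ^ 2 * kf s + 4 * PI * s ^ 2 * (exp (lf s) * ef s) ^ 2) - (8 * PI * s ^ 2 * kg s + 4 * PI * s ^ 2 * (exp (lg s) * eg s) ^ 2))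
     (fun s => K / s ^ 2) r0 r ltac:(lra)).
    - intros s Hs. apply (is_derive_minus (mf lf) (mf lg));
      [apply (m_der _ _ _ _ _ _ _ _ _ Sf) | apply (m_der _ _ _ _ _ _ _ _ _ Sg)]; lra.
    - intros s Hs. auto_derive; [lra|]. field. lra.
    - apply (RC_cont (fun s => mf lf s - mf lg s)). apply (continuous_minus (mf lf) (mf lg)).
      + eapply der_cont. apply (m_der _ _ _ _ _ _ _ _ _ Sf); lra.
      + eapply der_cont. apply (m_der _ _ _ _ _ _ _ _ _ Sg); lra.
    - apply (RC_cont (fun s => - K / s)). apply der_cont with (K / r0 ^ 2). auto_derive; [lra|]. field. lra.
    - intros s Hs.
      destruct Sf as (_ & _ & _ & _ & _ & _ & _ & F8 & _). destruct Sg as (_ & _ & _ & _ & _ & _ & _ & G8 & _).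
      destruct (F8 s ltac:(lra)) as [-> _]. destruct (G8 s ltac:(lra)) as [-> _].
      assert (Hs2 : 0 < s ^ 2) by (apply pow_lt; lra).
      rewrite !E_of_P by lra.
      rewrite (P_const _ _ _ _ _ _ _ _ _ Hr0 (proj1 (proj2 HH)) s) by lra.
      rewrite (P_const _ _ _ _ _ _ _ _ _ Hr0 (proj1 (proj2 (proj2 HH))) s) by lra.
      set (a := Pf lf ef r0). set (b := Pf lg eg r0).
      replace (8 * PI * s ^ 2 * 0 + 4 * PI * s ^ 2 * (a / s ^ 2) ^ 2 - (8 * PI * s ^ 2 * 0 + 4 * PI * s ^ 2 * (b / s ^ 2) ^ 2))
        with (4 * PI * ((a + b) * (a - b)) / s ^ 2) by (field; lra).
      assert (Ha : Rabs a <= cc q Lam BM * r0 ^ 3) by (apply (P_bound _ _ _ _ _ _ _ _ _ (proj1 (proj2 HH))); lra).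
      assert (Hb : Rabs b <= cc q Lam BM * r0 ^ 3) by (apply (P_bound _ _ _ _ _ _ _ _ _ (proj1 (proj2 (proj2 HH)))); lra).
      assert (Hab : Rabs (a - b) <= a2 q r0 Lam BM Kk KM * d * r0 ^ 3) by (apply (S7 _ _ _ _ _ _ _ _ _ _ _ _ _ _ _ _ _ Hr0 HKk HKM HH); lra).
      unfold Rdiv. rewrite Rabs_mult, (Rabs_right (/ s ^ 2)) by (left; apply Rinv_0_lt_compat; auto).
      apply Rmult_le_compat_r; [left; apply Rinv_0_lt_compat; auto|].
      rewrite Rabs_mult, (Rabs_right (4 * PI)) by lra. rewrite Rabs_mult.
      assert (Rabs (a + b) <= 2 * cc q Lam BM * r0 ^ 3) by (eapply Rle_trans; [apply Rabs_triang|]; lra).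
      assert (Rabs (a + b) * Rabs (a - b) <= 2 * cc q Lam BM * r0 ^ 3 * (a2 q r0 Lam BM Kk KM * d * r0 ^ 3))
        by (apply Rmult_le_compat; auto; apply Rabs_pos).
      unfold K, K6.
      replace (8 * PI * cc q Lam BM * a2 q r0 Lam BM Kk KM * r0 ^ 6 * d) with (4 * PI * (2 * cc q Lam BM * r0 ^ 3 * (a2 q r0 Lam BM Kk KM * d * r0 ^ 3))) by ring.
      apply Rmult_le_compat_l; lra. }
  assert (Hk1 : - K / r - - K / r0 <= K / r0).
  { assert (0 <= K / r) by (apply Rmult_le_pos; [lra| left; apply Rinv_0_lt_compat; lra]).
    replace (- K / r - - K / r0) with (K / r0 - K / r) by (field; lra). lra. }
  assert (Rabs (mf lf r - mf lg r) <= Rabs (mf lf r0 - mf lg r0) + Rabs ((mf lf r - mf lg r) - (mf lf r0 - mf lg r0))).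
  { replace (mf lf r - mf lg r) with ((mf lf r0 - mf lg r0) + ((mf lf r - mf lg r) - (mf lf r0 - mf lg r0))) at 1 by ring.
    apply Rabs_triang. }
  replace ((Cm0 q r0 Lam BM Kk KM + K6 q r0 Lam BM Kk KM / r0) * d) with (Cm0 q r0 Lam BM Kk KM * d + K / r0) by (unfold K; field; lra).
  lra.
Qed.

Definition Cl q r0 Lam BM Kk KM := Cl0 q r0 Lam BM Kk KM + Cl1 q r0 Lam BM Kk KM.

Lemma Cl1_nonneg q r0 Lam BM Kk KM : 0 < r0 -> 0 <= BM -> 0 <= Kk -> 0 <= KM -> 0 <= Cl1 q r0 Lam BM Kk KM.
Proof.
  intros Hr0 HBM HKk HKM.
  destruct (Cl0_nonneg q r0 Lam BM Kk KM) as [HC0 HCV]; auto.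
  assert (Ha2 := a2_nonneg q r0 Lam BM Kk KM Hr0 HBM HKk HKM).
  assert (HPI : 0 < PI) by apply PI_RGT_0. pose proof (Rabs_pos q).
  assert (0 < exp Lam) by apply exp_pos. assert (0 < exp (2 * Lam)) by apply exp_pos.
  assert (Hc : 0 <= cc q Lam BM) by (unfold cc; apply Rmult_le_pos; [|lra]; apply Rmult_le_pos; [nra|lra]).
  assert (HA : 0 <= A0 q r0 Lam KM) by (unfold A0; repeat apply Rmult_le_pos; try lra; try apply pow2_ge_0; auto).
  assert (HB : 0 <= BB q r0 Lam BM) by (unfold BB; repeat apply Rmult_le_pos; try lra; try apply pow2_ge_0; auto).
  assert (Hg : 0 <= gam q r0 Lam BM) by (unfold gam; assert (0 <= PI * cc q Lam BM) by (apply Rmult_le_pos; lra); nra).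
  assert (HCm : 0 <= Cm0 q r0 Lam BM Kk KM).
  { unfold Cm0. apply Rplus_le_le_0_compat.
    - assert (0 <= PI * Kk) by (apply Rmult_le_pos; lra). assert (0 <= r0 ^ 3) by (apply pow_le; lra). nra.
    - apply Rmult_le_pos; [|lra]. apply Rmult_le_pos; auto. assert (0 <= A0 q r0 Lam KM * r0) by nra.
      assert (0 <= BB q r0 Lam BM * CV q r0 Lam BM Kk KM) by nra. lra. }
  assert (HK6 : 0 <= K6 q r0 Lam BM Kk KM).
  { unfold K6. assert (0 <= PI * cc q Lam BM) by (apply Rmult_le_pos; lra). assert (0 <= r0 ^ 6) by (apply pow_le; lra).
    assert (0 <= 8 * PI * cc q Lam BM * a2 q r0 Lam BM Kk KM) by nra. nra. }
  unfold Cl1. apply Rmult_le_pos; [lra|]. apply Rmult_le_pos; [|left; apply Rinv_0_lt_compat; lra].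
  assert (0 <= K6 q r0 Lam BM Kk KM / r0) by (apply Rmult_le_pos; [lra| left; apply Rinv_0_lt_compat; lra]). lra.
Qed.

Lemma S9 q r0 Lam BM Kk KM lf ef dlf Mf kf lg eg dlg Mg kg d : 0 < r0 -> 0 <= Kk -> 0 <= KM ->
  Hyp q r0 Lam BM Kk KM lf ef dlf Mf kf lg eg dlg Mg kg d ->
  forall r, 0 <= r -> Rabs (lf r - lg r) <= Cl q r0 Lam BM Kk KM * d.
Proof.
  intros Hr0 HKk HKM HH r Hr.
  assert (HH' := HH). destruct HH' as (Hd & Sf & Sg & Hk & HM).
  assert (HBM : 0 <= BM) by (destruct Sf as (_ & _ & _ & _ & _ & _ & _ & _ & H9); pose proof (H9 0 ltac:(lra)); pose proof (Rabs_pos (Mf 0)); lra).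
  destruct (Cl0_nonneg q r0 Lam BM Kk KM) as [HC0 HCV]; auto.
  assert (HC1 := Cl1_nonneg q r0 Lam BM Kk KM Hr0 HBM HKk HKM).
  unfold Cl.
  destruct (Rle_dec r r0).
  - eapply Rle_trans; [apply (S6 _ _ _ _ _ _ _ _ _ _ _ _ _ _ _ _ _ Hr0 HKk HKM HH); lra|]. nra.
  - assert (H3 := S3 _ _ _ _ _ _ _ _ _ _ _ _ _ _ _ _ _ HH r ltac:(lra)).
    assert (H8 := S8 _ _ _ _ _ _ _ _ _ _ _ _ _ _ _ _ _ Hr0 HKk HKM HH r ltac:(lra)).
    assert (Rabs (lf r - lg r) <= Cl1 q r0 Lam BM Kk KM * d); [|nra].
    eapply Rle_trans; [exact H3|]. unfold Cl1.
    set (X := Cm0 q r0 Lam BM Kk KM + K6 q r0 Lam BM Kk KM / r0) in *.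
    assert (0 <= X * d) by (pose proof (Rabs_pos (mf lf r - mf lg r)); lra).
    assert (Rabs (mf lf r - mf lg r) / r <= X * d / r0).
    { unfold Rdiv. apply Rle_trans with (X * d * / r).
      - apply Rmult_le_compat_r; auto. left; apply Rinv_0_lt_compat; lra.
      - apply Rmult_le_compat_l; auto. apply Rinv_le_contravar; lra. }
    replace (exp (2 * Lam) / 2 * (X / r0) * d) with (exp (2 * Lam) / 2 * (X * d / r0)) by (field; lra).
    apply Rmult_le_compat_l; auto. pose proof (exp_pos (2 * Lam)). lra.
Qed.

Lemma S10 q r0 Lam BM Kk KM lf ef dlf Mf kf lg eg dlg Mg kg d : 0 < r0 -> 0 <= Kk -> 0 <= KM ->
  Hyp q r0 Lam BM Kk KM lf ef dlf Mf kf lg eg dlg Mg kg d ->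
  forall r, 0 < r -> Rabs (exp (lf r) * ef r - exp (lg r) * eg r) <= a2 q r0 Lam BM Kk KM * r0 * d.
Proof.
  intros Hr0 HKk HKM HH r Hr.
  assert (HH' := HH). destruct HH' as (Hd & Sf & Sg & Hk & HM).
  assert (HBM : 0 <= BM) by (destruct Sf as (_ & _ & _ & _ & _ & _ & _ & _ & H9); pose proof (H9 0 ltac:(lra)); pose proof (Rabs_pos (Mf 0)); lra).
  assert (Ha2 := a2_nonneg q r0 Lam BM Kk KM Hr0 HBM HKk HKM).
  assert (Hr2 : 0 < r ^ 2) by (apply pow_lt; lra).
  rewrite !E_of_P by lra.
  replace (Pf lf ef r / r ^ 2 - Pf lg eg r / r ^ 2) with ((Pf lf ef r - Pf lg eg r) * / r ^ 2) by (field; lra).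
  rewrite Rabs_mult, (Rabs_right (/ r ^ 2)) by (left; apply Rinv_0_lt_compat; auto).
  destruct (Rle_dec r r0).
  - assert (H7 := S7 _ _ _ _ _ _ _ _ _ _ _ _ _ _ _ _ _ Hr0 HKk HKM HH r ltac:(lra)).
    apply Rle_trans with (a2 q r0 Lam BM Kk KM * d * r ^ 3 * / r ^ 2).
    + apply Rmult_le_compat_r; auto. left; apply Rinv_0_lt_compat; auto.
    + replace (a2 q r0 Lam BM Kk KM * d * r ^ 3 * / r ^ 2) with (a2 q r0 Lam BM Kk KM * d * r) by (field; lra).
      assert (0 <= a2 q r0 Lam BM Kk KM * d) by nra. nra.
  - rewrite (P_const _ _ _ _ _ _ _ _ _ Hr0 Sf r) by lra. rewrite (P_const _ _ _ _ _ _ _ _ _ Hr0 Sg r) by lra.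
    assert (H7 := S7 _ _ _ _ _ _ _ _ _ _ _ _ _ _ _ _ _ Hr0 HKk HKM HH r0 ltac:(lra)).
    apply Rle_trans with (a2 q r0 Lam BM Kk KM * d * r0 ^ 3 * / r ^ 2).
    + apply Rmult_le_compat_r; auto. left; apply Rinv_0_lt_compat; auto.
    + assert (r0 ^ 3 / r ^ 2 <= r0).
      { apply Rmult_le_reg_r with (r ^ 2); auto. unfold Rdiv. rewrite Rmult_assoc, Rinv_l by lra.
        replace (r0 ^ 3 * 1) with (r0 * r0 ^ 2) by ring. apply Rmult_le_compat_l; [lra|].
        apply pow_incr; lra. }
      assert (0 <= a2 q r0 Lam BM Kk KM * d) by nra.
      replace (a2 q r0 Lam BM Kk KM * d * r0 ^ 3 * / r ^ 2) with (a2 q r0 Lam BM Kk KM * d * (r0 ^ 3 / r ^ 2)) by (unfold Rdiv; ring).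
      replace (a2 q r0 Lam BM Kk KM * r0 * d) with (a2 q r0 Lam BM Kk KM * d * r0) by ring.
      apply Rmult_le_compat_l; auto.
Qed.

Definition Cfin q r0 Lam BM Kk KM :=
  1 + Lam + Cl q r0 Lam BM Kk KM + a2 q r0 Lam BM Kk KM * r0
  + 2 * (cc q Lam BM * r0) * (a2 q r0 Lam BM Kk KM * r0)
  + (a2 q r0 Lam BM Kk KM * r0 + cc q Lam BM * r0 * Cl q r0 Lam BM Kk KM)
  + cc q Lam BM * r0 + exp Lam * Cl q r0 Lam BM Kk KM + 2 * exp (2 * Lam) * Cl q r0 Lam BM Kk KM.

Lemma main_est q r0 Lam BM Kk KM : 0 < r0 -> 0 < Lam -> 0 <= BM -> 0 <= Kk -> 0 <= KM ->
  exists C, 0 < C /\ forall lf ef dlf Mf kf lg eg dlg Mg kg d,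
  Hyp q r0 Lam BM Kk KM lf ef dlf Mf kf lg eg dlg Mg kg d ->
  forall r, 0 <= r ->
   Rabs (lf r) <= C /\ Rabs (ef r) <= C /\
   Rabs (exp (lf r) - exp (lg r)) <= C * d /\
   Rabs (exp (lf r) * ef r - exp (lg r) * eg r) <= C * d /\
   Rabs (ef r - eg r) <= C * d /\
   Rabs (lf r - lg r) <= C * d /\
   Rabs (exp (2 * lf r) * (ef r) ^ 2 - exp (2 * lg r) * (eg r) ^ 2) <= C * d /\
   Rabs (exp (2 * lf r) - exp (2 * lg r)) <= C * d.
Proof.
  intros Hr0 HL HBM HKk HKM.
  destruct (Cl0_nonneg q r0 Lam BM Kk KM) as [HC0 HCV]; auto.
  assert (HC1 := Cl1_nonneg q r0 Lam BM Kk KM Hr0 HBM HKk HKM).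
  assert (Ha2 := a2_nonneg q r0 Lam BM Kk KM Hr0 HBM HKk HKM).
  assert (Hcc : 0 <= cc q Lam BM).
  { unfold cc. pose proof (Rabs_pos q). assert (0 < exp Lam) by apply exp_pos. apply Rmult_le_pos; [|lra]. apply Rmult_le_pos; [nra|lra]. }
  assert (HCl : 0 <= Cl q r0 Lam BM Kk KM) by (unfold Cl; lra).
  set (c := cc q Lam BM) in *. set (a := a2 q r0 Lam BM Kk KM) in *. set (L := Cl q r0 Lam BM Kk KM) in *.
  assert (E1 : 0 < exp Lam) by apply exp_pos. assert (E2 : 0 < exp (2 * Lam)) by apply exp_pos.
  assert (T1 : 0 <= a * r0) by nra. assert (T2 : 0 <= c * r0) by nra.
  assert (T3 : 0 <= 2 * (c * r0) * (a * r0)) by nra. assert (T4 : 0 <= c * r0 * L) by nra.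
  assert (T5 : 0 <= exp Lam * L) by nra. assert (T6 : 0 <= 2 * exp (2 * Lam) * L) by nra.
  exists (Cfin q r0 Lam BM Kk KM). unfold Cfin; fold c a L.
  split; [lra|].
  intros lf ef dlf Mf kf lg eg dlg Mg kg d HH r Hr.
  assert (HH' := HH). destruct HH' as (Hd & Sf & Sg & Hk & HM).
  set (C := 1 + Lam + L + a * r0 + 2 * (c * r0) * (a * r0) + (a * r0 + c * r0 * L) + c * r0 + exp Lam * L + 2 * exp (2 * Lam) * L).
  assert (HC : forall X, 0 <= X -> X <= C -> X * d <= C * d) by (intros; apply Rmult_le_compat_r; auto).
  destruct Sf as (F1 & _ & _ & _ & F5 & F6 & _). destruct Sg as (G1 & _ & _ & _ & G5 & G6 & _).
  destruct (F1 r Hr) as [F1a F1b]. destruct (G1 r Hr) as [G1a G1b].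
  assert (Hdl := S9 _ _ _ _ _ _ _ _ _ _ _ _ _ _ _ _ _ Hr0 HKk HKM HH r Hr). fold L in Hdl.
  assert (Hdl' : Rabs (lf r - lg r) <= C * d) by (eapply Rle_trans; [exact Hdl| apply HC; unfold C; lra]).
  assert (Hexp : Rabs (exp (lf r) - exp (lg r)) <= C * d).
  { eapply Rle_trans; [apply (exp_lip _ _ Lam); lra|].
    apply Rle_trans with (exp Lam * L * d). rewrite Rmult_assoc. apply Rmult_le_compat_l; lra.
    apply HC; [lra| unfold C; lra]. }
  assert (Hexp2 : Rabs (exp (2 * lf r) - exp (2 * lg r)) <= C * d).
  { eapply Rle_trans; [apply (exp_lip _ _ (2 * Lam)); lra|].
    replace (2 * lf r - 2 * lg r) with (2 * (lf r - lg r)) by ring. rewrite Rabs_mult, (Rabs_right 2) by lra.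
    apply Rle_trans with (2 * exp (2 * Lam) * L * d).
    - replace (2 * exp (2 * Lam) * L * d) with (exp (2 * Lam) * (2 * (L * d))) by ring.
      apply Rmult_le_compat_l; lra.
    - apply HC; [lra| unfold C; lra]. }
  assert (Hlf : Rabs (lf r) <= C) by (rewrite Rabs_right by lra; unfold C; lra).
  assert (HCp : 0 <= C * d) by (apply Rmult_le_pos; [unfold C; lra | lra]).
  destruct (Req_dec r 0) as [->|Hr'].
  { rewrite F5, G5, F6, G6. repeat split; auto;
    match goal with |- Rabs ?x <= _ => replace x with 0 by ring; rewrite Rabs_R0; (lra || (unfold C; lra)) end. }
  assert (Hrp : 0 < r) by lra.
  assert (HE := S10 _ _ _ _ _ _ _ _ _ _ _ _ _ _ _ _ _ Hr0 HKk HKM HH r Hrp). fold a in HE.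
  assert (HEf := Eb _ _ _ _ _ _ _ _ _ Hr0 (proj1 (proj2 HH)) r Hrp). fold (cc q Lam BM) c in HEf.
  assert (HEg := Eb _ _ _ _ _ _ _ _ _ Hr0 (proj1 (proj2 (proj2 HH))) r Hrp). fold (cc q Lam BM) c in HEg.
  assert (Rmin r r0 <= r0) by apply Rmin_r.
  assert (HEf' : Rabs (exp (lf r) * ef r) <= c * r0) by (eapply Rle_trans; [exact HEf|]; apply Rmult_le_compat_l; auto).
  assert (HEg' : Rabs (exp (lg r) * eg r) <= c * r0) by (eapply Rle_trans; [exact HEg|]; apply Rmult_le_compat_l; auto).
  set (Ef := exp (lf r) * ef r) in *. set (Eg := exp (lg r) * eg r) in *.
  assert (Eef : ef r = exp (- lf r) * Ef) by (unfold Ef; rewrite <- Rmult_assoc, <- exp_plus; replace (- lf r + lf r) with 0 by ring; rewrite exp_0; ring).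
  assert (Eeg : eg r = exp (- lg r) * Eg) by (unfold Eg; rewrite <- Rmult_assoc, <- exp_plus; replace (- lg r + lg r) with 0 by ring; rewrite exp_0; ring).
  assert (Hm1 : exp (- lf r) <= 1) by (rewrite <- exp_0; apply exp_le_L; lra).
  assert (Hm2 : 0 < exp (- lf r)) by apply exp_pos.
  repeat split; auto.
  - rewrite Eef, Rabs_mult, Rabs_right by lra.
    apply Rle_trans with (1 * (c * r0)). apply Rmult_le_compat; auto; try lra; apply Rabs_pos. unfold C; lra.
  - eapply Rle_trans; [exact HE|]. apply HC; [lra| unfold C; lra].
  - rewrite Eef, Eeg.
    replace (exp (- lf r) * Ef - exp (- lg r) * Eg) with (exp (- lf r) * (Ef - Eg) + Eg * (exp (- lf r) - exp (- lg r))) by ring.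
    eapply Rle_trans; [apply Rabs_triang|].
    assert (Q1 : Rabs (exp (- lf r) * (Ef - Eg)) <= a * r0 * d).
    { rewrite Rabs_mult, (Rabs_right (exp (- lf r))) by lra. apply Rle_trans with (1 * (a * r0 * d)).
      apply Rmult_le_compat; auto; try lra; apply Rabs_pos. lra. }
    assert (Q2 : Rabs (Eg * (exp (- lf r) - exp (- lg r))) <= c * r0 * (L * d)).
    { apply abs_mul_le; auto. eapply Rle_trans; [apply (exp_lip _ _ 0); lra|]. rewrite exp_0.
      replace (- lf r - - lg r) with (- (lf r - lg r)) by ring. rewrite Rabs_Ropp. lra. }
    apply Rle_trans with ((a * r0 + c * r0 * L) * d). lra.
    apply HC; [lra| unfold C; lra].
  - replace (exp (2 * lf r) * ef r ^ 2 - exp (2 * lg r) * eg r ^ 2) with (Ef ^ 2 - Eg ^ 2).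
    2:{ unfold Ef, Eg. replace (2 * lf r) with (lf r + lf r) by ring. replace (2 * lg r) with (lg r + lg r) by ring.
        rewrite !exp_plus. ring. }
    replace (Ef ^ 2 - Eg ^ 2) with ((Ef + Eg) * (Ef - Eg)) by ring.
    apply Rle_trans with ((2 * (c * r0)) * (a * r0 * d)).
    + apply abs_mul_le; auto. eapply Rle_trans; [apply Rabs_triang|]. lra.
    + replace (2 * (c * r0) * (a * r0 * d)) with (2 * (c * r0) * (a * r0) * d) by ring.
      apply HC; [lra| unfold C; lra].
Qed.

Lemma sup_le (h : R -> R) X : (forall r, 0 <= r -> Rabs (h r) <= X) -> Rbar_le (sup_half h) (Finite X).
Proof.
  intro H. unfold sup_half.
  destruct (Lub_Rbar_correct (fun y => exists r, 0 <= r /\ y = Rabs (h r))) as [_ Hl].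
  apply Hl. intros y [r [Hr ->]]. simpl. auto.
Qed.

Lemma sup_ge (h : R -> R) X r : Rbar_le (sup_half h) (Finite X) -> 0 <= r -> Rabs (h r) <= X.
Proof.
  intros H Hr. unfold sup_half in H.
  destruct (Lub_Rbar_correct (fun y => exists r, 0 <= r /\ y = Rabs (h r))) as [Hu _].
  assert (H1 : Rbar_le (Finite (Rabs (h r))) (Lub_Rbar (fun y => exists r, 0 <= r /\ y = Rabs (h r)))).
  { apply Hu. exists r; auto. }
  exact (Rbar_le_trans _ _ _ H1 H).
Qed.

Lemma sup6_fin (h : R3 -> R3 -> R) eps : Rbar_lt (sup6 h) (Finite eps) ->
  exists dd, sup6 h = Finite dd /\ 0 <= dd /\ forall x v, Rabs (h x v) <= dd.
Proof.
  intro H. unfold sup6 in *.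
  destruct (Lub_Rbar_correct (fun y => exists x v : R3, y = Rabs (h x v))) as [Hu _].
  set (L := Lub_Rbar (fun y => exists x v : R3, y = Rabs (h x v))) in *.
  assert (Hall : forall x v, Rbar_le (Finite (Rabs (h x v))) L) by (intros x v; apply Hu; exists x, v; auto).
  destruct L as [dd| |] eqn:EL.
  - exists dd. split; auto. split.
    + specialize (Hall (0,0,0) (0,0,0)). simpl in Hall. pose proof (Rabs_pos (h (0,0,0) (0,0,0))). lra.
    + intros x v. specialize (Hall x v). simpl in Hall. auto.
  - simpl in H. contradiction.
  - specialize (Hall (0,0,0) (0,0,0)). simpl in Hall. contradiction.
Qed.

Lemma lin0 (h dh : R -> R) : filterlim (fun s => (h s - h 0) / s) (at_right 0) (locally (dh 0)) ->
  exists del, 0 < del /\ forall s, 0 < s < del -> Rabs (h s - h 0) <= (Rabs (dh 0) + 1) * s.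
Proof.
  intro H. apply filterlim_locally with (eps := mkposreal 1 Rlt_0_1) in H.
  destruct H as [del Hdel]. exists del. split; [apply cond_pos|]. intros s Hs.
  assert (Hb : ball 0 del s) by (apply ballR; rewrite Rminus_0_r, Rabs_right; lra).
  specialize (Hdel s Hb ltac:(lra)). apply ballR in Hdel. change (Rabs ((h s - h 0) / s - dh 0) < 1) in Hdel.
  replace (h s - h 0) with (s * ((h s - h 0) / s)) by (field; lra).
  rewrite Rabs_mult, (Rabs_right s) by lra.
  assert (Rabs ((h s - h 0) / s) <= Rabs (dh 0) + 1).
  { replace ((h s - h 0) / s) with (dh 0 + ((h s - h 0) / s - dh 0)) by ring.
    eapply Rle_trans; [apply Rabs_triang|]. lra. }
  nra.
Qed.

Lemma int3_zero : int3 (fun _ => 0) = 0.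
Proof.
  assert (Z : RInt_gen (fun _ : R => 0) (Rbar_locally m_infty) (Rbar_locally p_infty) = 0).
  { rewrite (RG (fun _ => 0) 1); [apply RInt_zero_on; auto | lra | intros; apply ex_RInt_const | auto]. }
  unfold int3. rewrite !Z. reflexivity.
Qed.

Lemma zero_dens f r0 u0 : support_in f r0 u0 -> forall r, r0 <= r -> 0 < r0 ->
  kin_density f r = 0 /\ charge_density f r = 0.
Proof.
  intros Hs r Hr Hr0.
  assert (Hz : forall v, f (xr r) v = 0).
  { intro v. apply (supp_zero f r0 u0 Hs). left. rewrite norm3_xr. rewrite Rabs_right; lra. }
  unfold kin_density, charge_density. split.
  - replace (fun v : R3 => f (xr r) v * sqrt (1 + dot3 v v)) with (fun _ : R3 => 0).
    apply int3_zero. apply functional_extensionality. intro v. rewrite Hz. ring.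
  - replace (fun v : R3 => f (xr r) v) with (fun _ : R3 => 0).
    apply int3_zero. apply functional_extensionality. intro v. rewrite Hz. ring.
Qed.

Lemma M_I3 f r0 u0 : 0 < u0 -> smooth6 f -> support_in f r0 u0 ->
  forall t, charge_density f t = I3 (fun t v => f (xr t) v) u0 t.
Proof. intros Hu Hs Hsp t. exact (int3_I3 _ u0 Hu (Hm_cont f Hs) (Hm_zero f r0 u0 Hsp) t). Qed.

Lemma K_I3 f r0 u0 : 0 < u0 -> smooth6 f -> support_in f r0 u0 ->
  forall t, kin_density f t = I3 (fun t v => f (xr t) v * sqrt (1 + dot3 v v)) u0 t.
Proof. intros Hu Hs Hsp t. exact (int3_I3 _ u0 Hu (Hk_cont f Hs) (Hk_zero f r0 u0 Hsp) t). Qed.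

Lemma M_diff f g r0 u0 dd : 0 < u0 -> smooth6 f -> support_in f r0 u0 -> smooth6 g -> support_in g r0 u0 ->
  (forall x v, Rabs (f x v - g x v) <= dd) ->
  forall t, Rabs (charge_density f t - charge_density g t) <= 8 * u0 ^ 3 * dd.
Proof.
  intros Hu Hsf Hpf Hsg Hpg Hd t. rewrite (M_I3 f r0 u0), (M_I3 g r0 u0) by auto.
  eapply Rle_trans; [apply (I3_diff _ _ u0 dd Hu (Hm_cont f Hsf) (Hm_cont g Hsg)); intros; apply Hd|].
  right. ring.
Qed.

Lemma K_diff f g r0 u0 dd : 0 < u0 -> smooth6 f -> support_in f r0 u0 -> smooth6 g -> support_in g r0 u0 ->
  (forall x v, Rabs (f x v - g x v) <= dd) ->
  forall t, Rabs (kin_density f t - kin_density g t) <= 8 * u0 ^ 3 * sqrt (1 + 3 * u0 ^ 2) * dd.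
Proof.
  intros Hu Hsf Hpf Hsg Hpg Hd t. rewrite (K_I3 f r0 u0), (K_I3 g r0 u0) by auto.
  assert (Hdd : 0 <= dd) by (pose proof (Hd (0,0,0) (0,0,0)); pose proof (Rabs_pos (f (0,0,0) (0,0,0) - g (0,0,0) (0,0,0))); lra).
  eapply Rle_trans; [apply (I3_diff _ _ u0 (dd * sqrt (1 + 3 * u0 ^ 2)) Hu (Hk_cont f Hsf) (Hk_cont g Hsg))|].
  2:{ right. ring. }
  intros s v.
  destruct (classic (u0 <= Rabs (Defs.c1 v) \/ u0 <= Rabs (Defs.c2 v) \/ u0 <= Rabs (Defs.c3 v))) as [Hb|Hb].
  - rewrite (Hk_zero f r0 u0 Hpf s v Hb), (Hk_zero g r0 u0 Hpg s v Hb). rewrite Rminus_diag, Rabs_R0.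
    apply Rmult_le_pos; auto. apply sqrt_pos.
  - replace (f (xr s) v * sqrt (1 + dot3 v v) - g (xr s) v * sqrt (1 + dot3 v v)) with
      ((f (xr s) v - g (xr s) v) * sqrt (1 + dot3 v v)) by ring.
    rewrite Rabs_mult, (Rabs_right (sqrt _)) by (apply Rle_ge, sqrt_pos).
    apply Rmult_le_compat; auto; try apply Rabs_pos; try apply sqrt_pos.
    apply sqrt_le_1_alt.
    assert (Rabs (Defs.c1 v) < u0 /\ Rabs (Defs.c2 v) < u0 /\ Rabs (Defs.c3 v) < u0) as (A1 & A2 & A3).
    { repeat split; apply Rnot_le_lt; intro; apply Hb; auto. }
    unfold dot3.
    assert (Defs.c1 v * Defs.c1 v <= u0 ^ 2) by (pose proof (Rabs_pos (Defs.c1 v)); rewrite <- (Rabs_right (Defs.c1 v * Defs.c1 v)) by (apply Rle_ge; nra); rewrite Rabs_mult; nra).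
    assert (Defs.c2 v * Defs.c2 v <= u0 ^ 2) by (pose proof (Rabs_pos (Defs.c2 v)); rewrite <- (Rabs_right (Defs.c2 v * Defs.c2 v)) by (apply Rle_ge; nra); rewrite Rabs_mult; nra).
    assert (Defs.c3 v * Defs.c3 v <= u0 ^ 2) by (pose proof (Rabs_pos (Defs.c3 v)); rewrite <- (Rabs_right (Defs.c3 v * Defs.c3 v)) by (apply Rle_ge; nra); rewrite Rabs_mult; nra).
    lra.
Qed.

Lemma Mbound g r0 u0 : 0 < r0 -> 0 < u0 -> smooth6 g -> support_in g r0 u0 ->
  exists Bg, 0 <= Bg /\ forall r, 0 <= r -> Rabs (charge_density g r) <= Bg.
Proof.
  intros Hr0 Hu Hs Hp.
  set (F := fun t => Rabs (I3 (fun t v => g (xr t) v) u0 t)).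
  destruct (continuity_ab_maj F 0 r0 ltac:(lra)) as [Mx [HM HMx]].
  { intros c Hc. apply continuity_pt_filterlim. unfold F.
    apply (continuous_comp (I3 (fun t v => g (xr t) v) u0) Rabs).
    - apply I3_cont; auto. apply Hm_cont; auto.
    - apply continuous_Rabs. }
  exists (F Mx). split; [apply Rabs_pos|].
  intros r Hr. destruct (Rle_dec r r0).
  - rewrite (M_I3 g r0 u0) by auto. apply (HM r). lra.
  - destruct (zero_dens g r0 u0 Hp r ltac:(lra) Hr0) as [_ ->]. rewrite Rabs_R0. apply Rabs_pos.
Qed.

Lemma D_Sol q r0 u0 Lam BM f lam e : 0 < r0 -> 0 < u0 -> in_D q r0 u0 Lam f lam e ->
  (forall r, 0 <= r -> Rabs (charge_density f r) <= BM) ->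
  exists dl, Sol q r0 Lam BM lam e dl (charge_density f) (kin_density f).
Proof.
  intros Hr0 Hu Hin HB.
  destruct Hin as (Hs & Hpos & Hsym & Hsupp & Hmass & [mu Hreg] & Hsup).
  destruct Hreg as (E1 & E2 & E3 & Hl0 & Hmu & [dl [Dl1 [Dl2 Dl3]]] & Cmu & [de [De1 [De2 De3]]] & Llim & Mlim & L0 & Elim & E0).
  exists dl. unfold Sol. split; [|split; [|split; [|split; [|split; [|split; [|split; [|split]]]]]]].
  - intros r Hr. split; [apply Hl0; auto|]. assert (H := sup_ge lam Lam r Hsup Hr).
    apply Rabs_le_between in H. lra.
  - exact Dl1.
  - intros r Hr. specialize (E1 r Hr). rewrite (is_derive_unique _ _ _ (Dl1 r Hr)) in E1.
    unfold rho in E1. exact E1.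
  - intros r Hr. rewrite <- (E3 r Hr).
    apply (Derive_correct (fun s => s ^ 2 * exp (lam s) * e s) r).
    auto_derive. split; [exists (dl r); apply Dl1; auto|]. split; [exists (de r); apply De1; auto|auto].
  - exact L0.
  - exact E0.
  - destruct (lin0 lam dl Dl2) as [d1 [Hd1 P1]]. destruct (lin0 e de De2) as [d2 [Hd2 P2]].
    exists (Rmin d1 d2), (Rabs (dl 0) + 1 + (Rabs (de 0) + 1)). split; [apply Rmin_pos; auto|].
    intros s Hs0. assert (Hm1 := Rmin_l d1 d2). assert (Hm2 := Rmin_r d1 d2).
    specialize (P1 s ltac:(lra)). specialize (P2 s ltac:(lra)). rewrite L0, Rminus_0_r in P1. rewrite E0, Rminus_0_r in P2.
    pose proof (Rabs_pos (dl 0)). pose proof (Rabs_pos (de 0)). split; nra.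
  - intros r Hr. apply (zero_dens f r0 u0 Hsupp r Hr Hr0).
  - exact HB.
Qed.

Theorem proposition3p1 (q r0 u0 Lam : R) (g : R3 -> R3 -> R) (lam_g e_g : R -> R) :
  0 < r0 -> 0 < u0 -> 0 < Lam ->
  in_D q r0 u0 Lam g lam_g e_g ->
  exists eps C : R, 0 < eps /\ 0 < C /\
    forall (f : R3 -> R3 -> R) (lam_f e_f : R -> R),
      in_D q r0 u0 Lam f lam_f e_f ->
      let d := sup6 (fun x v => f x v - g x v) in
      Rbar_lt d (Finite eps) ->
      Rbar_le (sup_half lam_f) (Finite C) /\
      Rbar_le (sup_half e_f) (Finite C) /\
      Rbar_le (sup_half (fun r => exp (lam_f r) - exp (lam_g r))) (Rbar_mult C d) /\
      Rbar_le (sup_half (fun r => exp (lam_f r) * e_f r - exp (lam_g r) * e_g r))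
              (Rbar_mult C d) /\
      Rbar_le (sup_half (fun r => e_f r - e_g r)) (Rbar_mult C d) /\
      Rbar_le (sup_half (fun r => lam_f r - lam_g r)) (Rbar_mult C d) /\
      Rbar_le (sup_half (fun r => exp (2 * lam_f r) * (e_f r) ^ 2
                                  - exp (2 * lam_g r) * (e_g r) ^ 2))
              (Rbar_mult C d) /\
      Rbar_le (sup_half (fun r => exp (2 * lam_f r) - exp (2 * lam_g r)))
              (Rbar_mult C d).
Proof.
  intros Hr0 Hu0 HL Hg.
  assert (Hg' := Hg). destruct Hg' as (Hsg & _ & _ & Hpg & _).
  destruct (Mbound g r0 u0 Hr0 Hu0 Hsg Hpg) as [Bg [HBg HBg']].
  set (KM := 8 * u0 ^ 3). set (Kk := 8 * u0 ^ 3 * sqrt (1 + 3 * u0 ^ 2)).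
  assert (HKM : 0 <= KM) by (unfold KM; assert (0 <= u0 ^ 3) by (apply pow_le; lra); lra).
  assert (HKk : 0 <= Kk) by (unfold Kk; apply Rmult_le_pos; [assert (0 <= u0 ^ 3) by (apply pow_le; lra); lra | apply sqrt_pos]).
  set (BM := Bg + KM).
  destruct (main_est q r0 Lam BM Kk KM Hr0 HL ltac:(unfold BM; lra) HKk HKM) as [C [HC Hest]].
  exists 1, C. split; [lra|]. split; [auto|].
  intros f lf ef Hf d Hd.
  destruct (sup6_fin _ 1 Hd) as [dd [Ed [Hdd Hdd']]].
  assert (Hd1 : dd < 1) by (unfold d in Hd; rewrite Ed in Hd; simpl in Hd; exact Hd).
  unfold d. rewrite Ed. simpl.
  assert (Hf' := Hf). destruct Hf' as (Hsf & _ & _ & Hpf & _).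
  assert (HMd := M_diff f g r0 u0 dd Hu0 Hsf Hpf Hsg Hpg Hdd').
  assert (HKd := K_diff f g r0 u0 dd Hu0 Hsf Hpf Hsg Hpg Hdd').
  destruct (D_Sol q r0 u0 Lam BM g lam_g e_g Hr0 Hu0 Hg) as [dlg Sg].
  { intros r Hr. specialize (HBg' r Hr). unfold BM. lra. }
  destruct (D_Sol q r0 u0 Lam BM f lf ef Hr0 Hu0 Hf) as [dlf Sf].
  { intros r Hr. specialize (HBg' r Hr). specialize (HMd r). unfold BM.
    assert (KM * dd <= KM) by (unfold KM in *; nra). fold KM in HMd.
    replace (charge_density f r) with (charge_density g r + (charge_density f r - charge_density g r)) by ring.
    eapply Rle_trans; [apply Rabs_triang|]. lra. }
  assert (HH : Hyp q r0 Lam BM Kk KM lf ef dlf (charge_density f) (kin_density f)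
                 lam_g e_g dlg (charge_density g) (kin_density g) dd).
  { split; [auto|split; [auto|split; [auto|split]]].
    - intros r _. apply HKd.
    - intros r _. apply HMd. }
  assert (E := Hest _ _ _ _ _ _ _ _ _ _ _ HH).
  repeat split; apply sup_le; intros r Hr; apply (E r Hr).
Qed.
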